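(* Let $\alpha\in(0,1)$, $T>0$, and let $y\in C^1([0,T])$. Fix $t\in(0,T)$, and for $n\in\mathbb{N}$ put $h=t/n$, $t_k=kh$, $y_k=y(t_k)$. Define the remainder $r_n$ by $$J^\alpha\delta^\alpha y_n = y_n - y_0 + r_n .$$ Then, setting $\beta:=\min(\alpha,1-\alpha)$, there are a constant $C$ depending only on $\alpha$ and $y$ and an $n_0$ such that for all $n\ge n_0$ (i.e. as $n\to\infty$ with $nh=t$) $$|r_n|\le C\,h^{\beta}\int_0^t (t-s)^{-\beta}\,|y'(s)|\,ds .$$
   Context: For $\beta>0$ and integers $j\ge 1$, the weights are $b_j(\beta)=j^\beta-(j-1)^\beta$. For a time step $h>0$, mesh points $t_k=kh$ and values $y_k=y(t_k)$, the discrete fractional integral (rectangle rule) and the L1 discretization of the Caputo derivative of order $\alpha\in(0,1)$ are $$J^\alpha y_n=\frac{h^\alpha}{\Gamma(1+\alpha)}\sum_{i=0}^{n-1} b_{n-i}(\alpha)\,y_{i+1},\qquad \delta^\alpha y_n=\frac{h^{-\alpha}}{\Gamma(2-\alpha)}\sum_{i=0}^{n-1} b_{n-i}(1-\alpha)\,(y_{i+1}-y_i).$$ The composition $J^\alpha\delta^\alpha y_n$ means $J^\alpha$ applied to the sequence $(\delta^\alpha y_k)_{k\ge1}$, i.e. $J^\alpha\delta^\alpha y_n=\frac{h^\alpha}{\Gamma(1+\alpha)}\sum_{i=0}^{n-1} b_{n-i}(\alpha)\,\delta^\alpha y_{i+1}$. *)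

(* Defs.v *)
From Stdlib Require Import Reals.
From Coquelicot Require Import Coquelicot.
Open Scope R_scope.

(* x^a for x >= 0, with the convention 0^a = 0 (used only with a > 0 at x = 0). *)
Definition rpow (x a : R) : R := if Rle_dec x 0 then 0 else Rpower x a.

Definition Gamma (x : R) : R :=
  RInt_gen (fun s => Rpower s (x - 1) * exp (- s)) (at_right 0) (Rbar_locally p_infty).

Definition bw (beta : R) (j : nat) : R :=
  rpow (INR j) beta - rpow (INR j - 1) beta.

Fixpoint sum_lt (f : nat -> R) (n : nat) : R :=
  match n with O => 0 | S m => sum_lt f m + f m end.

(* discrete fractional integral J^alpha applied to a sequence u (u k = value at t_k) *)
Definition Jd (alpha h : R) (u : nat -> R) (n : nat) : R :=
  Rpower h alpha / Gamma (1 + alpha) *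
  sum_lt (fun i => bw alpha (n - i) * u (S i)) n.

(* L1 discretization of the Caputo derivative *)
Definition deltad (alpha h : R) (u : nat -> R) (n : nat) : R :=
  Rpower h (- alpha) / Gamma (2 - alpha) *
  sum_lt (fun i => bw (1 - alpha) (n - i) * (u (S i) - u i)) n.

Definition JdeltaY (alpha h : R) (y : R -> R) (n : nat) : R :=
  Jd alpha h (deltad alpha h (fun k => y (INR k * h))) n.

(* Main.v *)
Require Import Defs.
From Stdlib Require Import Reals.
From Coquelicot Require Import Coquelicot.
Open Scope R_scope.
From Stdlib Require Import Lra Lia.

Lemma sum_lt_ext f g n : (forall i, (i < n)%nat -> f i = g i) -> sum_lt f n = sum_lt g n.
Proof. induction n; simpl; intros H; auto. rewrite IHn by (intros; apply H; lia). rewrite H by lia. reflexivity. Qed.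

Lemma sum_lt_plus f g n : sum_lt (fun i => f i + g i) n = sum_lt f n + sum_lt g n.
Proof. induction n; simpl; [lra|rewrite IHn; lra]. Qed.

Lemma sum_lt_minus f g n : sum_lt (fun i => f i - g i) n = sum_lt f n - sum_lt g n.
Proof. induction n; simpl; [lra|rewrite IHn; lra]. Qed.

Lemma sum_lt_scal c f n : sum_lt (fun i => c * f i) n = c * sum_lt f n.
Proof. induction n; simpl; [lra|rewrite IHn; lra]. Qed.

Lemma sum_lt_le f g n : (forall i, (i < n)%nat -> f i <= g i) -> sum_lt f n <= sum_lt g n.
Proof. induction n; simpl; intros H; [lra|]. assert (f n <= g n) by (apply H; lia).
 assert (sum_lt f n <= sum_lt g n) by (apply IHn; intros; apply H; lia). lra. Qed.

Lemma sum_lt_nonneg f n : (forall i, (i < n)%nat -> 0 <= f i) -> 0 <= sum_lt f n.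
Proof. intros H. replace 0 with (sum_lt (fun _ => 0) n). apply sum_lt_le; auto.
 induction n; simpl; auto. rewrite IHn; [lra| intros; apply H; lia]. Qed.

Lemma sum_lt_const c n : sum_lt (fun _ => c) n = INR n * c.
Proof. induction n; simpl sum_lt; [simpl; lra|rewrite IHn, S_INR; lra]. Qed.

Lemma sum_lt_abs f n : Rabs (sum_lt f n) <= sum_lt (fun i => Rabs (f i)) n.
Proof. induction n; simpl. rewrite Rabs_R0; lra.
 eapply Rle_trans; [apply Rabs_triang|]. lra. Qed.

Lemma sum_lt_app f n m : sum_lt f (n + m) = sum_lt f n + sum_lt (fun i => f (n + i)%nat) m.
Proof. induction m; simpl. rewrite Nat.add_0_r; lra.
 rewrite Nat.add_succ_r; simpl. rewrite IHm; lra. Qed.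

Lemma sum_lt_swap (F : nat -> nat -> R) n m :
  sum_lt (fun i => sum_lt (fun j => F i j) m) n = sum_lt (fun j => sum_lt (fun i => F i j) n) m.
Proof. induction n; simpl.
 - induction m; simpl; auto. rewrite <- IHm; lra.
 - rewrite IHn. rewrite <- sum_lt_plus. reflexivity. Qed.

Lemma sum_lt_tele f n : sum_lt (fun i => f (S i) - f i) n = f n - f O.
Proof. induction n; simpl; [lra|rewrite IHn; lra]. Qed.

Lemma sum_lt_block (F : nat -> R) m j :
  sum_lt F (m * j) = sum_lt (fun r => sum_lt (fun i => F (m * r + i)%nat) m) j.
Proof. induction j; simpl. rewrite Nat.mul_0_r; reflexivity.
 replace (m * S j)%nat with (m * j + m)%nat by lia. rewrite sum_lt_app, IHj. reflexivity. Qed.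

Lemma sum_lt_mono f n m : (n <= m)%nat -> (forall i, (i < m)%nat -> 0 <= f i) -> sum_lt f n <= sum_lt f m.
Proof. intros Hnm H. replace m with (n + (m - n))%nat by lia. rewrite sum_lt_app.
 assert (0 <= sum_lt (fun i => f (n + i)%nat) (m - n)) by (apply sum_lt_nonneg; intros; apply H; lia). lra. Qed.

Lemma sum_lt_tri (G : nat -> nat -> R) N :
  sum_lt (fun j => sum_lt (fun q => G q (j - q)%nat) (S j)) N =
  sum_lt (fun q => sum_lt (fun p => G q p) (N - q)) N.
Proof. induction N. reflexivity.
 change (sum_lt (fun j => sum_lt (fun q => G q (j - q)%nat) (S j)) N + sum_lt (fun q => G q (N - q)%nat) (S N)
   = sum_lt (fun q => sum_lt (fun p => G q p) (S N - q)) N + sum_lt (fun p => G N p) (S N - N)).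
 rewrite IHN. replace (S N - N)%nat with 1%nat by lia.
 rewrite (sum_lt_ext (fun q => sum_lt (fun p => G q p) (S N - q)) (fun q => sum_lt (fun p => G q p) (N - q) + G q (N - q)%nat)).
 2:{ intros i Hi. replace (S N - i)%nat with (S (N - i)) by lia. reflexivity. }
 rewrite sum_lt_plus. simpl. replace (N-N)%nat with O by lia. lra. Qed.

Lemma sum_lt_S f n : sum_lt f (S n) = sum_lt f n + f n.
Proof. reflexivity. Qed.

Lemma Rpower_pos x c : 0 < Rpower x c.
Proof. unfold Rpower; apply exp_pos. Qed.

Lemma rpow_pos x c : 0 < x -> rpow x c = Rpower x c.
Proof. intros. unfold rpow. destruct (Rle_dec x 0); [lra|auto]. Qed.

Lemma rpow_nonpos x c : x <= 0 -> rpow x c = 0.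
Proof. intros. unfold rpow. destruct (Rle_dec x 0); [auto|lra]. Qed.

Lemma rpow_nonneg x c : 0 <= rpow x c.
Proof. unfold rpow. destruct (Rle_dec x 0); [lra|left; apply Rpower_pos]. Qed.

Definition P c k := rpow (INR k) c.

Lemma bw_S c k : bw c (S k) = P c (S k) - P c k.
Proof. unfold bw, P. rewrite S_INR. f_equal. f_equal. ring. Qed.

Lemma bw_0 c : bw c 0 = 0.
Proof. unfold bw. simpl. rewrite !rpow_nonpos; lra. Qed.

Lemma P_0 c : P c 0 = 0.
Proof. unfold P; simpl; apply rpow_nonpos; lra. Qed.

Lemma P_1 c : P c 1 = 1.
Proof. unfold P; simpl. rewrite rpow_pos by lra. unfold Rpower. rewrite ln_1, Rmult_0_r, exp_0. auto. Qed.

Lemma INR_pos1 k : (1 <= k)%nat -> 0 < INR k.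
Proof. intros; apply lt_0_INR; lia. Qed.

Lemma Rpower_le_exp_neg x y e : 0 < y <= x -> e <= 0 -> Rpower x e <= Rpower y e.
Proof. intros Hxy He. replace e with (- (- e)) by ring. rewrite (Rpower_Ropp x (-e)), (Rpower_Ropp y (-e)).
 apply Rinv_le_contravar. apply Rpower_pos. apply Rle_Rpower_l; lra. Qed.

Lemma Rpower_one_exp x : 0 < x -> Rpower x 1 = x.
Proof. apply Rpower_1. Qed.

Lemma bernoulli c x : 0 < c < 1 -> 0 < x -> Rpower x c <= 1 + c * (x - 1).
Proof.
 intros Hc Hx.
 destruct (MVT_gen (fun u => Rpower u c) 1 x (fun u => c * Rpower u (c - 1))) as [xi [Hxi Heq]].
 - intros u Hu. apply is_derive_Reals. apply derivable_pt_lim_power.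
   assert (0 < Rmin 1 x) by (apply Rmin_pos; lra). lra.
 - intros u Hu. apply derivable_continuous_pt. exists (c * Rpower u (c-1)).
   apply derivable_pt_lim_power. assert (0 < Rmin 1 x) by (apply Rmin_pos; lra). lra.
 - assert (Hxi0 : 0 < xi) by (assert (0 < Rmin 1 x) by (apply Rmin_pos; lra); lra).
   replace (Rpower 1 c) with 1 in Heq by (unfold Rpower; rewrite ln_1, Rmult_0_r, exp_0; auto).
   destruct (Rle_lt_dec x 1).
   + rewrite Rmin_right, Rmax_left in Hxi by lra.
     assert (1 <= Rpower xi (c - 1)).
     { replace (c - 1) with (- (1 - c)) by ring. rewrite Rpower_Ropp.
       assert (Ha1 : Rpower xi (1 - c) <= 1).
       { replace 1 with (Rpower 1 (1-c)) at 2 by (unfold Rpower; rewrite ln_1, Rmult_0_r, exp_0; auto).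
         apply Rle_Rpower_l; lra. }
       assert (Ha0 : 0 < Rpower xi (1-c)) by apply Rpower_pos.
       pose proof (Rinv_le_contravar _ _ Ha0 Ha1) as HH. rewrite Rinv_1 in HH. lra. }
     assert (0 <= c * (1 - x) * (Rpower xi (c-1) - 1)) by (apply Rmult_le_pos; [apply Rmult_le_pos|]; lra). nra.
   + rewrite Rmin_left, Rmax_right in Hxi by lra.
     assert (Rpower xi (c - 1) <= 1).
     { assert (Rpower xi (c - 1) <= Rpower xi 0) by (apply Rle_Rpower; lra).
       replace (Rpower xi 0) with 1 in * by (unfold Rpower; rewrite Rmult_0_l, exp_0; auto). lra. }
     assert (0 < Rpower xi (c-1)) by apply Rpower_pos.
     assert (0 <= c * (x - 1) * (1 - Rpower xi (c-1))) by (apply Rmult_le_pos; [apply Rmult_le_pos|]; lra). nra.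
Qed.

Lemma P_nonneg c k : 0 <= P c k.
Proof. apply rpow_nonneg. Qed.

Lemma P_homog c m k : (1 <= m)%nat -> P c (m * k) = Rpower (INR m) c * P c k.
Proof. intros Hm. destruct k.
 - rewrite Nat.mul_0_r, !P_0. ring.
 - unfold P. rewrite mult_INR. assert (0 < INR m) by (apply INR_pos1; auto).
   assert (0 < INR (S k)) by (apply INR_pos1; lia).
   rewrite !rpow_pos by nra. rewrite Rpower_mult_distr; auto. Qed.

Lemma P_mono c k : 0 < c -> P c k <= P c (S k).
Proof. intros Hc. destruct k. rewrite P_0; apply P_nonneg.
 unfold P. rewrite !rpow_pos by (apply INR_pos1; lia). apply Rle_Rpower_l. lra.
 split. apply INR_pos1; lia. apply le_INR; lia. Qed.

Lemma bw_nonneg c k : 0 < c -> 0 <= bw c k.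
Proof. intros Hc. destruct k. rewrite bw_0; lra. rewrite bw_S. pose proof (P_mono c k Hc). lra. Qed.

Lemma Rpower_div x c : 0 < x -> Rpower x c / x = Rpower x (c - 1).
Proof. intros. unfold Rminus. rewrite Rpower_plus, Rpower_Ropp, Rpower_1 by auto. unfold Rdiv; ring. Qed.

Lemma bw_bound c k : 0 < c < 1 -> (1 <= k)%nat -> bw c (S k) <= Rpower (INR k) (c - 1).
Proof. intros Hc Hk. rewrite bw_S. unfold P. assert (Hk0 : 0 < INR k) by (apply INR_pos1; auto).
 rewrite !rpow_pos by (try apply INR_pos1; lia).
 rewrite S_INR. replace (INR k + 1) with (INR k * (1 + / INR k)) by (field; lra).
 rewrite <- Rpower_mult_distr by (try lra; assert (0 < / INR k) by (apply Rinv_0_lt_compat; lra); lra).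
 assert (0 < / INR k) by (apply Rinv_0_lt_compat; lra).
 pose proof (bernoulli c (1 + / INR k) Hc ltac:(lra)).
 pose proof (Rpower_pos (INR k) c).
 rewrite <- Rpower_div by auto.
 assert (Rpower (INR k) c * Rpower (1 + / INR k) c - Rpower (INR k) c <= Rpower (INR k) c * (c * / INR k)).
 { replace (c * / INR k) with (1 + c * (1 + / INR k - 1) - 1) by ring. nra. }
 assert (0 <= Rpower (INR k) c * / INR k * (1 - c)) by (apply Rmult_le_pos; [apply Rmult_le_pos|]; lra).
 unfold Rdiv. nra. Qed.

Lemma bw_decr c k : 0 < c < 1 -> bw c (S (S k)) <= bw c (S k).
Proof. intros Hc. rewrite !bw_S.
 destruct k.
 - rewrite P_0, P_1. unfold P. rewrite rpow_pos by (simpl; lra).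
   pose proof (bernoulli c (INR 2) Hc ltac:(simpl; lra)). simpl in *. lra.
 - set (y := INR (S (S k))). assert (Hy : 2 <= y) by (unfold y; rewrite !S_INR; pose proof (pos_INR k); lra).
   unfold P. rewrite !rpow_pos by (apply INR_pos1; lia).
   assert (E1 : INR (S (S (S k))) = y + 1) by (unfold y; rewrite (S_INR (S (S k))); ring).
   assert (E2 : INR (S k) = y - 1) by (unfold y; rewrite (S_INR (S k)); ring).
   rewrite E1, E2.
   replace (y + 1) with (y * (1 + / y)) by (field; lra).
   replace (y - 1) with (y * (1 - / y)) by (field; lra).
   assert (0 < / y) by (apply Rinv_0_lt_compat; lra). assert (/ y <= / 2) by (apply Rinv_le_contravar; lra).
   rewrite <- !Rpower_mult_distr by lra.
   pose proof (bernoulli c (1 + / y) Hc ltac:(lra)). pose proof (bernoulli c (1 - / y) Hc ltac:(lra)).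
   pose proof (Rpower_pos y c).
   assert (HS : Rpower (1 + / y) c + Rpower (1 - / y) c <= 2) by lra.
   assert (0 <= Rpower y c * (2 - (Rpower (1 + / y) c + Rpower (1 - / y) c))) by (apply Rmult_le_pos; lra).
   change (INR (S (S k))) with y. nra. Qed.

Lemma bw_anti c k l : 0 < c < 1 -> (1 <= k <= l)%nat -> bw c l <= bw c k.
Proof. intros Hc [Hk Hl]. induction Hl. lra.
 destruct m. lia. eapply Rle_trans; [apply bw_decr; auto|auto]. Qed.

Lemma bw_1 c : bw c 1 = 1.
Proof. rewrite bw_S, P_0, P_1. ring. Qed.

Lemma bw_le1 c k : 0 < c < 1 -> bw c k <= 1.
Proof. intros Hc. destruct k. rewrite bw_0; lra. rewrite <- (bw_1 c). apply bw_anti; auto; lia. Qed.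

Lemma Rpower_one_base e : Rpower 1 e = 1.
Proof. unfold Rpower. rewrite ln_1, Rmult_0_r, exp_0. auto. Qed.

Lemma exp_le_mono x y : x <= y -> exp x <= exp y.
Proof. intros [H|H]. left; apply exp_increasing; auto. subst; lra. Qed.

Definition Kk A B j := sum_lt (fun q => bw A (j - q) * bw B (S q)) j.

Lemma Kk_nonneg A B j : 0 < A -> 0 < B -> 0 <= Kk A B j.
Proof. intros. apply sum_lt_nonneg. intros. apply Rmult_le_pos; apply bw_nonneg; auto. Qed.

Lemma Kk_1 A B : Kk A B 1 = 1.
Proof. unfold Kk. simpl. rewrite bw_1. replace (1 - 0)%nat with 1%nat by lia. rewrite bw_1. ring. Qed.

Lemma sum_lt_prod_expand (u v : nat -> R) a b m :
  sum_lt (fun i => (u i - a) * (v i - b)) m =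
  sum_lt (fun i => u i * v i) m - a * sum_lt v m - b * sum_lt u m + INR m * a * b.
Proof. induction m; simpl sum_lt. simpl; ring. rewrite IHm, S_INR. ring. Qed.

Lemma chebyshev (u v : nat -> R) m :
  (forall i k, (i <= k < m)%nat -> v i <= v k) ->
  (forall i k, (i <= k < m)%nat -> u k <= u i) ->
  INR m * sum_lt (fun i => u i * v i) m <= sum_lt u m * sum_lt v m.
Proof.
 induction m; intros Hv Hu. simpl; lra.
 assert (IH : INR m * sum_lt (fun i => u i * v i) m <= sum_lt u m * sum_lt v m).
 { apply IHm; intros; [apply Hv|apply Hu]; lia. }
 assert (Hneg : sum_lt (fun i => (u i - u m) * (v i - v m)) m <= 0).
 { replace 0 with (sum_lt (fun _ => 0) m).
   2:{ clear. induction m; simpl; auto. rewrite IHm; ring. }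
   apply sum_lt_le. intros i Hi. assert (v i <= v m) by (apply Hv; lia). assert (u m <= u i) by (apply Hu; lia).
   nra. }
 rewrite sum_lt_prod_expand in Hneg. simpl sum_lt. rewrite S_INR. nra. Qed.

Section KernelBlock.
Variables A B : R.
Hypothesis HA : 0 < A < 1.
Hypothesis HB : 0 < B < 1.
Hypothesis HAB : A + B = 1.

Lemma tele_u m r : (1 <= m)%nat ->
  sum_lt (fun i => bw B (S (m * r + i))) m = Rpower (INR m) B * bw B (S r).
Proof. intros Hm.
 rewrite (sum_lt_ext _ (fun i => P B (m * r + S i) - P B (m * r + i))).
 2:{ intros; rewrite bw_S, Nat.add_succ_r; reflexivity. }
 rewrite (sum_lt_tele (fun i => P B (m * r + i)%nat)).
 rewrite Nat.add_0_r. replace (m * r + m)%nat with (m * S r)%nat by lia.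
 rewrite !P_homog by auto. rewrite bw_S. ring. Qed.

Lemma tele_v m s : (1 <= m)%nat -> (1 <= s)%nat ->
  sum_lt (fun i => bw A (m * s - i)) m = Rpower (INR m) A * bw A s.
Proof. intros Hm Hs.
 rewrite (sum_lt_ext _ (fun i => (- P A (m * s - S i)) - (- P A (m * s - i)))).
 2:{ intros i Hi. replace (m * s - i)%nat with (S (m * s - S i)) by nia. rewrite bw_S. ring. }
 rewrite (sum_lt_tele (fun i => - P A (m * s - i))).
 replace (m * s - m)%nat with (m * (s - 1))%nat by nia. rewrite Nat.sub_0_r.
 rewrite !P_homog by auto. replace s with (S (s - 1)) at 3 by lia. rewrite bw_S.
 replace (S (s - 1)) with s by lia. ring. Qed.

Lemma avg_bw c m k : 0 < c < 1 -> (1 <= m)%nat -> (1 <= k)%nat ->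
  Rpower (INR m) c * bw c (S k) <= INR m * bw c (m * k).
Proof. intros Hc Hm Hk.
 assert (E : sum_lt (fun i => bw c (S (m * k + i))) m = Rpower (INR m) c * bw c (S k)).
 { rewrite (sum_lt_ext _ (fun i => P c (m * k + S i) - P c (m * k + i))).
   2:{ intros; rewrite bw_S, Nat.add_succ_r; reflexivity. }
   rewrite (sum_lt_tele (fun i => P c (m * k + i)%nat)).
   rewrite Nat.add_0_r. replace (m * k + m)%nat with (m * S k)%nat by lia.
   rewrite !P_homog by auto. rewrite bw_S. ring. }
 rewrite <- E. rewrite <- sum_lt_const. apply sum_lt_le. intros i Hi. apply bw_anti; auto. nia. Qed.

Lemma Rpower_m_AB m : (1 <= m)%nat -> Rpower (INR m) A * Rpower (INR m) B = INR m.
Proof. intros. rewrite <- Rpower_plus, HAB. apply Rpower_1. apply INR_pos1; auto. Qed.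

Definition blk m j r := sum_lt (fun i => bw A (m * j - (m * r + i)) * bw B (S (m * r + i))) m.

Lemma Kk_block m j : Kk A B (m * j) = sum_lt (fun r => blk m j r) j.
Proof. unfold Kk, blk. apply sum_lt_block. Qed.

Lemma blk_eq m j r : (r < j)%nat -> blk m j r =
  sum_lt (fun i => bw B (S (m * r + i)) * bw A (m * (j - r) - i)) m.
Proof. intros. unfold blk. apply sum_lt_ext. intros i Hi.
 replace (m * j - (m * r + i))%nat with (m * (j - r) - i)%nat by nia. ring. Qed.

Lemma blk_bounds m j r : (1 <= m)%nat -> (r < j)%nat ->
  blk m j r <= bw A (j - r) * bw B (S r) /\
  bw B (S r) * bw A (S (j - r)) <= blk m j r /\
  bw A (j - r) * bw B (S (S r)) <= blk m j r.
Proof. intros Hm Hr. rewrite blk_eq by auto.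
 set (s := (j - r)%nat). assert (Hs : (1 <= s)%nat) by (unfold s; lia).
 set (u := fun i => bw B (S (m * r + i))). set (v := fun i => bw A (m * s - i)).
 change (sum_lt (fun i => u i * v i) m <= bw A s * bw B (S r) /\
   bw B (S r) * bw A (S s) <= sum_lt (fun i => u i * v i) m /\
   bw A s * bw B (S (S r)) <= sum_lt (fun i => u i * v i) m).
 assert (Hu : forall i k, (i <= k < m)%nat -> u k <= u i).
 { intros i k Hik. unfold u. apply bw_anti; auto; lia. }
 assert (Hv : forall i k, (i <= k < m)%nat -> v i <= v k).
 { intros i k Hik. unfold v. apply bw_anti; auto; nia. }
 assert (Su : sum_lt u m = Rpower (INR m) B * bw B (S r)) by (apply tele_u; auto).
 assert (Sv : sum_lt v m = Rpower (INR m) A * bw A s) by (apply tele_v; auto).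
 assert (Hm0 : 0 < INR m) by (apply INR_pos1; auto).
 pose proof (Rpower_m_AB m Hm) as HmAB.
 pose proof (Rpower_pos (INR m) A). pose proof (Rpower_pos (INR m) B).
 assert (u0 : forall i, 0 <= u i) by (intros; apply bw_nonneg; lra).
 assert (v0 : forall i, 0 <= v i) by (intros; apply bw_nonneg; lra).
 split; [|split].
 - pose proof (chebyshev u v m Hv Hu). rewrite Su, Sv in H1.
   apply (Rmult_le_reg_l (INR m)); auto.
   assert (E : Rpower (INR m) B * bw B (S r) * (Rpower (INR m) A * bw A s) = INR m * (bw A s * bw B (S r))) by (transitivity (Rpower (INR m) A * Rpower (INR m) B * (bw A s * bw B (S r))); [ring | rewrite HmAB; reflexivity]).
   lra.
 - assert (L1 : sum_lt u m * v O <= sum_lt (fun i => u i * v i) m).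
   { rewrite Rmult_comm, <- sum_lt_scal. apply sum_lt_le. intros i Hi.
     assert (v O <= v i) by (apply Hv; lia). specialize (u0 i). nra. }
   assert (A1 : Rpower (INR m) A * bw A (S s) <= INR m * v O).
   { unfold v. rewrite Nat.sub_0_r. apply avg_bw; auto. }
   rewrite Su in L1. apply (Rmult_le_reg_l (INR m)); auto.
   assert (0 <= bw B (S r)) by (apply bw_nonneg; lra).
   assert (E : INR m * (bw B (S r) * bw A (S s)) = Rpower (INR m) B * bw B (S r) * (Rpower (INR m) A * bw A (S s))) by (transitivity (Rpower (INR m) A * Rpower (INR m) B * (bw B (S r) * bw A (S s))); [rewrite HmAB; reflexivity | ring]).
   rewrite E.
   assert (Rpower (INR m) B * bw B (S r) * (Rpower (INR m) A * bw A (S s)) <= Rpower (INR m) B * bw B (S r) * (INR m * v O)).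
   { apply Rmult_le_compat_l; auto. apply Rmult_le_pos; lra. }
   assert (INR m * (Rpower (INR m) B * bw B (S r) * v O) <= INR m * sum_lt (fun i => u i * v i) m) by (apply Rmult_le_compat_l; lra).
   lra.
 - assert (L2 : u (m - 1)%nat * sum_lt v m <= sum_lt (fun i => u i * v i) m).
   { rewrite <- sum_lt_scal. apply sum_lt_le. intros i Hi.
     assert (u (m - 1)%nat <= u i) by (apply Hu; lia). specialize (v0 i). nra. }
   assert (A2 : Rpower (INR m) B * bw B (S (S r)) <= INR m * u (m - 1)%nat).
   { unfold u. replace (S (m * r + (m - 1))) with (m * S r)%nat by nia. apply avg_bw; auto; lia. }
   rewrite Sv in L2. apply (Rmult_le_reg_l (INR m)); auto.
   assert (0 <= bw A s) by (apply bw_nonneg; lra).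
   assert (E : INR m * (bw A s * bw B (S (S r))) = Rpower (INR m) A * bw A s * (Rpower (INR m) B * bw B (S (S r)))) by (transitivity (Rpower (INR m) A * Rpower (INR m) B * (bw A s * bw B (S (S r)))); [rewrite HmAB; reflexivity | ring]).
   rewrite E.
   assert (Rpower (INR m) A * bw A s * (Rpower (INR m) B * bw B (S (S r))) <= Rpower (INR m) A * bw A s * (INR m * u (m - 1)%nat)).
   { apply Rmult_le_compat_l; auto. apply Rmult_le_pos; lra. }
   assert (INR m * (u (m - 1)%nat * (Rpower (INR m) A * bw A s)) <= INR m * sum_lt (fun i => u i * v i) m) by (apply Rmult_le_compat_l; lra).
   lra.
Qed.

Lemma Kk_mono m j : (1 <= m)%nat -> Kk A B (m * j) <= Kk A B j.
Proof. intros Hm. rewrite Kk_block. unfold Kk. apply sum_lt_le. intros r Hr.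
 apply (blk_bounds m j r Hm Hr). Qed.

Lemma Kk_diff m j R : (1 <= m)%nat -> (R <= j)%nat ->
  Kk A B j - Kk A B (m * j) <= bw A (S (j - R)) + bw B (S R).
Proof. intros Hm HR. rewrite Kk_block. unfold Kk. rewrite <- sum_lt_minus.
 set (X := bw A (S (j - R))). set (Y := bw B (S R)).
 set (d1 := fun r => bw B (S r) - bw B (S (S r))).
 set (d2 := fun r => bw A (j - r) - bw A (S (j - r))).
 assert (S1 : sum_lt d1 j <= 1).
 { unfold d1. rewrite (sum_lt_ext _ (fun r => (- bw B (S (S r))) - (- bw B (S r)))) by (intros; ring).
   rewrite (sum_lt_tele (fun r => - bw B (S r))). pose proof (bw_nonneg B (S j) ltac:(lra)).
   rewrite bw_1. lra. }
 assert (S2 : sum_lt d2 j <= 1).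
 { unfold d2. rewrite (sum_lt_ext _ (fun r => bw A (S (j - S r)) - bw A (S (j - r)))).
   2:{ intros r Hr. replace (S (j - S r)) with (j - r)%nat by lia. reflexivity. }
   rewrite (sum_lt_tele (fun r => bw A (S (j - r)))). rewrite Nat.sub_diag, Nat.sub_0_r.
   pose proof (bw_nonneg A (S j) ltac:(lra)). rewrite bw_1. lra. }
 assert (D1 : forall r, 0 <= d1 r) by (intros; unfold d1; pose proof (bw_decr B r HB); lra).
 assert (D2 : forall r, (r < j)%nat -> 0 <= d2 r).
 { intros r Hr; unfold d2. replace (j - r)%nat with (S (j - r - 1)) by lia. pose proof (bw_decr A (j - r - 1) HA). lra. }
 assert (X0 : 0 <= X) by (apply bw_nonneg; lra). assert (Y0 : 0 <= Y) by (apply bw_nonneg; lra).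
 apply Rle_trans with (sum_lt (fun r => X * d1 r + Y * d2 r) j).
 - apply sum_lt_le. intros r Hr. destruct (blk_bounds m j r Hm Hr) as [_ [L1 L2]].
   pose proof (D1 r). pose proof (D2 r Hr).
   destruct (Nat.lt_ge_cases r R) as [HrR|HrR].
   + assert (bw A (j - r) <= X) by (unfold X; apply bw_anti; auto; lia).
     assert (0 <= Y * d2 r) by (apply Rmult_le_pos; auto).
     unfold d1 in *. assert (bw A (j - r) * (bw B (S r) - bw B (S (S r))) <= X * (bw B (S r) - bw B (S (S r)))) by nra.
     nra.
   + assert (bw B (S r) <= Y) by (unfold Y; apply bw_anti; auto; lia).
     assert (0 <= X * d1 r) by (apply Rmult_le_pos; auto).
     unfold d2 in *. assert (bw B (S r) * (bw A (j - r) - bw A (S (j - r))) <= Y * (bw A (j - r) - bw A (S (j - r)))) by nra.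
     nra.
 - rewrite sum_lt_plus, !sum_lt_scal. nra.
Qed.

End KernelBlock.

Lemma Rpower_1_base e : Rpower 1 e = 1.
Proof. unfold Rpower. rewrite ln_1, Rmult_0_r, exp_0. auto. Qed.

Lemma pow_scale_bound (k : R) x J e : 1 <= k -> 0 < x -> 0 < J -> J <= k * x -> -1 <= e <= 0 ->
  Rpower x e <= k * Rpower J e.
Proof. intros Hk Hx HJ HJx He.
 assert (H1 : Rpower (k * x) e <= Rpower J e) by (apply Rpower_le_exp_neg; nra).
 rewrite <- Rpower_mult_distr in H1 by lra.
 assert (H2 : Rpower k (Ropp 1) <= Rpower k e) by (apply Rle_Rpower; lra).
 rewrite Rpower_Ropp, Rpower_1 in H2 by lra.
 pose proof (Rpower_pos x e).
 assert (/ k * Rpower x e <= Rpower k e * Rpower x e) by (apply Rmult_le_compat_r; lra).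
 assert (Rpower x e = k * (/ k * Rpower x e)) by (field; lra).
 assert (0 < / k) by (apply Rinv_0_lt_compat; lra).
 nra. Qed.

Lemma Kk_rate A B beta : 0 < A < 1 -> 0 < B < 1 -> A + B = 1 -> 0 < beta -> beta <= A -> beta <= B ->
  forall m j, (1 <= m)%nat -> (1 <= j)%nat ->
  Kk A B j - Kk A B (m * j) <= 6 * Rpower (INR j) (- beta).
Proof.
 intros HA HB HAB Hb HbA HbB m j Hm Hj.
 assert (HJ1 : 1 <= INR j) by (replace 1 with (INR 1) by reflexivity; apply le_INR; auto).
 assert (Hpb : 1 <= Rpower (INR j) (- beta) -> True) by auto.
 destruct (Nat.eq_dec j 1) as [->|Hj2].
 - rewrite Kk_1. simpl INR. rewrite Rpower_1_base. pose proof (Kk_nonneg A B (m * 1) ltac:(lra) ltac:(lra)). lra.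
 - assert (HR : exists R, (1 <= R)%nat /\ (2 * R <= j <= 2 * R + 1)%nat).
   { destruct (Nat.Even_or_Odd j) as [[R HR]|[R HR]]; exists R; lia. }
   destruct HR as [R [HR1 HR2]].
   pose proof (Kk_diff A B HA HB HAB m j R Hm ltac:(lia)) as HD.
   assert (X1 : bw A (S (j - R)) <= Rpower (INR (j - R)) (A - 1)) by (apply bw_bound; auto; lia).
   assert (Y1 : bw B (S R) <= Rpower (INR R) (B - 1)) by (apply bw_bound; auto; lia).
   assert (X2 : Rpower (INR (j - R)) (A - 1) <= 2 * Rpower (INR j) (A - 1)).
   { apply pow_scale_bound; try lra. apply INR_pos1; lia.
     rewrite minus_INR by lia. assert (2 * INR R <= INR j) by (replace 2 with (INR 2) by reflexivity; rewrite <- mult_INR; apply le_INR; lia).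
     assert (INR j <= 2 * INR R + 1) by (replace 2 with (INR 2) by reflexivity; rewrite <- mult_INR, <- S_INR; apply le_INR; lia). lra. }
   assert (Y2 : Rpower (INR R) (B - 1) <= 4 * Rpower (INR j) (B - 1)).
   { apply pow_scale_bound; try lra. apply INR_pos1; lia.
     assert (1 <= INR R) by (replace 1 with (INR 1) by reflexivity; apply le_INR; lia).
     assert (INR j <= 2 * INR R + 1) by (replace 2 with (INR 2) by reflexivity; rewrite <- mult_INR, <- S_INR; apply le_INR; lia). lra. }
   assert (Z1 : Rpower (INR j) (A - 1) <= Rpower (INR j) (- beta)) by (apply Rle_Rpower; lra).
   assert (Z2 : Rpower (INR j) (B - 1) <= Rpower (INR j) (- beta)) by (apply Rle_Rpower; lra).
   lra.
Qed.

Lemma kernel_limit A B beta : 0 < A < 1 -> 0 < B < 1 -> A + B = 1 -> 0 < beta -> beta <= A -> beta <= B ->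
  exists L, 0 <= L /\ forall j, (1 <= j)%nat ->
    L <= Kk A B j /\ Kk A B j <= L + 6 * Rpower (INR j) (- beta) /\ Kk A B j <= 1.
Proof.
 intros HA HB HAB Hb HbA HbB.
 set (E := fun x => exists j, (1 <= j)%nat /\ x = - Kk A B j).
 assert (Hbd : bound E).
 { exists 0. intros x [j [Hj ->]]. pose proof (Kk_nonneg A B j ltac:(lra) ltac:(lra)). lra. }
 assert (Hne : exists x, E x) by (exists (- Kk A B 1); exists 1%nat; split; auto).
 destruct (completeness E Hbd Hne) as [M [HM1 HM2]].
 exists (- M). split.
 - assert (M <= 0). { apply HM2. intros x [j [Hj ->]]. pose proof (Kk_nonneg A B j ltac:(lra) ltac:(lra)). lra. } lra.
 - intros j Hj. split; [|split].
   + assert (- Kk A B j <= M) by (apply HM1; exists j; auto). lra.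
   + assert (M <= 6 * Rpower (INR j) (- beta) - Kk A B j).
     { apply HM2. intros x [k [Hk ->]].
       pose proof (Kk_rate A B beta HA HB HAB Hb HbA HbB k j Hk Hj).
       pose proof (Kk_mono A B HA HB HAB j k Hj). rewrite Nat.mul_comm in H0. lra. }
     lra.
   + pose proof (Kk_mono A B HA HB HAB j 1 Hj). rewrite Nat.mul_1_r, Kk_1 in H. auto.
Qed.

Lemma sup_lim (F : (R -> Prop) -> Prop) {FF : Filter F} (D : R -> Prop) (h : R -> R) M :
  (exists x, D x) -> (forall x, D x -> h x <= M) -> F D ->
  (forall x0, D x0 -> F (fun x => D x /\ h x0 <= h x)) ->
  exists l, filterlim h F (locally l) /\ forall x, D x -> h x <= l.
Proof.
 intros [x1 Hx1] HM HD Hmono.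
 set (E := fun y => exists x, D x /\ y = h x).
 assert (Hb : bound E) by (exists M; intros y [x [Hx ->]]; auto).
 destruct (completeness E Hb (ex_intro _ (h x1) (ex_intro _ x1 (conj Hx1 eq_refl)))) as [l [Hl1 Hl2]].
 assert (Hup : forall x, D x -> h x <= l) by (intros x Hx; apply Hl1; exists x; auto).
 exists l. split; auto.
 apply filterlim_locally. intros eps.
 assert (Hex : exists x0, D x0 /\ l - eps < h x0).
 { destruct (Classical_Prop.classic (exists x0, D x0 /\ l - eps < h x0)) as [H|H]; auto.
   exfalso. assert (l <= l - eps). { apply Hl2. intros y [x [Hx ->]].
     destruct (Rle_lt_dec (h x) (l - eps)); auto. exfalso; apply H; exists x; auto. }
   destruct eps; simpl in *; lra. }
 destruct Hex as [x0 [Hx0 Hlt]].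
 generalize (Hmono x0 Hx0). apply filter_imp. intros x [Hx Hle].
 pose proof (Hup x Hx). change (Rabs (h x - l) < eps). rewrite Rabs_left1 by lra. lra.
Qed.

Lemma mk_gen_left (f : R -> R) a (Fb : (R -> Prop) -> Prop) {FFb : Filter Fb} l :
  Fb (fun b => ex_RInt f a b) -> filterlim (fun b => RInt f a b) Fb (locally l) ->
  is_RInt_gen f (at_point a) Fb l.
Proof. intros Hex Hlim.
 apply (filterlimi_lim_ext_loc (fun ab : R * R => RInt (V := R_CompleteNormedModule) f (fst ab) (snd ab))).
 - apply (Filter_prod _ _ _ (fun x => x = a) (fun b => ex_RInt f a b)); auto.
   unfold at_point; auto. intros x y -> Hy. simpl. apply (RInt_correct (V := R_CompleteNormedModule)); auto.
 - apply filterlim_locally. intros eps. rewrite filterlim_locally in Hlim.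
   apply Filter_prod with (Q := fun x => x = a) (R := fun b => ball l eps (RInt f a b)).
   reflexivity. apply Hlim. intros x y -> Hy. exact Hy.
Qed.

Lemma mk_gen_right (f : R -> R) (Fa : (R -> Prop) -> Prop) {FFa : Filter Fa} b l :
  Fa (fun a => ex_RInt f a b) -> filterlim (fun a => RInt f a b) Fa (locally l) ->
  is_RInt_gen f Fa (at_point b) l.
Proof. intros Hex Hlim.
 apply (filterlimi_lim_ext_loc (fun ab : R * R => RInt (V := R_CompleteNormedModule) f (fst ab) (snd ab))).
 - apply (Filter_prod _ _ _ (fun a => ex_RInt f a b) (fun x => x = b)); auto.
   unfold at_point; auto. intros x y Hx ->. simpl. apply (RInt_correct (V := R_CompleteNormedModule)); auto.
 - apply filterlim_locally. intros eps. rewrite filterlim_locally in Hlim.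
   apply Filter_prod with (Q := fun a => ball l eps (RInt f a b)) (R := fun x => x = b).
   apply Hlim. reflexivity. intros x y Hx ->. exact Hx.
Qed.

Lemma impr_infty (f : R -> R) a M :
  (forall x y, a <= x -> a <= y -> ex_RInt f x y) -> (forall x, a <= x -> 0 <= f x) ->
  (forall v, a <= v -> RInt f a v <= M) ->
  exists l, is_RInt_gen f (at_point a) (Rbar_locally p_infty) l /\ forall v, a <= v -> RInt f a v <= l.
Proof. intros Hex Hpos HM.
 destruct (sup_lim (Rbar_locally p_infty) (fun v => a <= v) (fun v => RInt f a v) M) as [l [Hl1 Hl2]].
 - exists a; lra.
 - auto.
 - exists a. intros; lra.
 - intros x0 Hx0. exists x0. intros x Hx. split; [lra|].
   assert (E : RInt f a x0 + RInt f x0 x = RInt f a x) by (apply (RInt_Chasles f a x0 x); apply Hex; lra). rewrite <- E.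
   assert (0 <= RInt f x0 x) by (apply RInt_ge_0; [lra|apply Hex; lra|intros; apply Hpos; lra]).
   simpl. lra.
 - exists l. split; auto. apply mk_gen_left; auto. apply (@filter_filter _ _ (Rbar_locally_filter p_infty)). simpl. exists a. intros x Hx. apply Hex; lra.
Qed.

Lemma impr_left (f : R -> R) a t M : a < t ->
  (forall x y, a <= x < t -> a <= y < t -> ex_RInt f x y) -> (forall x, a <= x < t -> 0 <= f x) ->
  (forall v, a <= v < t -> RInt f a v <= M) ->
  exists l, is_RInt_gen f (at_point a) (at_left t) l /\ forall v, a <= v < t -> RInt f a v <= l.
Proof. intros Hat Hex Hpos HM.
 destruct (sup_lim (at_left t) (fun v => a <= v < t) (fun v => RInt f a v) M) as [l [Hl1 Hl2]].
 - exists a; lra.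
 - auto.
 - exists (mkposreal (t - a) ltac:(lra)). intros x Hx Hxt. simpl in Hx. change (Rabs (x - t) < t - a) in Hx.
   rewrite Rabs_left in Hx by lra. lra.
 - intros x0 Hx0. exists (mkposreal (t - x0) ltac:(lra)). intros x Hx Hxt. simpl in Hx. change (Rabs (x - t) < t - x0) in Hx.
   rewrite Rabs_left in Hx by lra. split; [lra|].
   assert (E : RInt f a x0 + RInt f x0 x = RInt f a x) by (apply (RInt_Chasles f a x0 x); apply Hex; lra). rewrite <- E.
   assert (0 <= RInt f x0 x) by (apply RInt_ge_0; [lra|apply Hex; lra|intros; apply Hpos; lra]).
   simpl. lra.
 - exists l. split; auto. apply mk_gen_left; auto. apply (@filter_filter _ _ (at_left_proper_filter t)).
   exists (mkposreal (t - a) ltac:(lra)). intros x Hx Hxt. simpl in Hx. change (Rabs (x - t) < t - a) in Hx.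
   rewrite Rabs_left in Hx by lra. apply Hex; lra.
Qed.

Lemma impr_zero (f : R -> R) b M : 0 < b ->
  (forall x y, 0 < x -> 0 < y -> ex_RInt f x y) -> (forall x, 0 < x -> 0 <= f x) ->
  (forall u, 0 < u <= b -> RInt f u b <= M) ->
  exists l, is_RInt_gen f (at_right 0) (at_point b) l /\ forall u, 0 < u <= b -> RInt f u b <= l.
Proof. intros Hb Hex Hpos HM.
 destruct (sup_lim (at_right 0) (fun u => 0 < u <= b) (fun u => RInt f u b) M) as [l [Hl1 Hl2]].
 - exists b; lra.
 - auto.
 - exists (mkposreal b Hb). intros x Hx Hx0. simpl in Hx. change (Rabs (x - 0) < b) in Hx.
   rewrite Rabs_right in Hx by lra. lra.
 - intros x0 Hx0. exists (mkposreal x0 ltac:(lra)). intros x Hx Hx0'. simpl in Hx. change (Rabs (x - 0) < x0) in Hx.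
   rewrite Rabs_right in Hx by lra. split; [lra|].
   assert (E : RInt f x x0 + RInt f x0 b = RInt f x b) by (apply (RInt_Chasles f x x0 b); apply Hex; lra). rewrite <- E.
   assert (0 <= RInt f x x0) by (apply RInt_ge_0; [lra|apply Hex; lra|intros; apply Hpos; lra]).
   simpl. lra.
 - exists l. split; auto. apply mk_gen_right; auto. apply (@filter_filter _ _ (at_right_proper_filter 0)).
   exists (mkposreal b Hb). intros x Hx Hx0. apply Hex; lra.
Qed.

Definition g c x := Rpower x c * exp (- x).

Lemma g_pos c x : 0 < g c x.
Proof. unfold g. apply Rmult_lt_0_compat. apply Rpower_pos. apply exp_pos. Qed.

Lemma ex_derive_Rpower x c : 0 < x -> ex_derive (fun u => Rpower u c) x.
Proof. intros. exists (c * Rpower x (c - 1)). apply is_derive_Reals. apply derivable_pt_lim_power; auto. Qed.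

Lemma g_cont c x : 0 < x -> continuous (g c) x.
Proof. intros Hx. apply (ex_derive_continuous (K := R_AbsRing) (V := R_NormedModule)). unfold g.
 apply (ex_derive_mult (fun u => Rpower u c) (fun u => exp (- u))).
 apply ex_derive_Rpower; auto. auto_derive. auto. Qed.

Lemma g_ex c u v : 0 < u -> 0 < v -> ex_RInt (g c) u v.
Proof. intros. apply (ex_RInt_continuous (V := R_CompleteNormedModule)). intros z Hz. apply g_cont.
 assert (0 < Rmin u v) by (apply Rmin_pos; auto). lra. Qed.

Lemma g_le1 c x : 0 < c -> 0 < x <= 1 -> g c x <= 1.
Proof. intros Hc Hx. unfold g.
 assert (Rpower x c <= 1) by (rewrite <- (Rpower_one_base c); apply Rle_Rpower_l; lra).
 assert (exp (- x) <= 1) by (rewrite <- exp_0; apply exp_le_mono; lra).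
 pose proof (Rpower_pos x c). pose proof (exp_pos (-x)). nra. Qed.

Lemma g_le_exp c x : 0 < c < 1 -> 1 <= x -> g c x <= 2 * exp (- (x / 2)).
Proof. intros Hc Hx. unfold g.
 assert (Rpower x c <= x) by (rewrite <- (Rpower_1 x) at 2 by lra; apply Rle_Rpower; lra).
 pose proof (exp_ineq1_le (x / 2)).
 assert (E : exp (- x) = exp (- (x / 2)) * exp (- (x / 2))) by (rewrite <- exp_plus; f_equal; field).
 assert (E2 : exp (x / 2) * exp (- (x / 2)) = 1) by (rewrite <- exp_plus; replace (x / 2 + - (x / 2)) with 0 by ring; apply exp_0).
 pose proof (exp_pos (- (x/2))). pose proof (exp_pos (-x)).
 assert (Rpower x c * exp (- x) <= x * exp (- x)) by (apply Rmult_le_compat_r; lra).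
 rewrite E in *. nra. Qed.

Lemma int_exp_half v : 1 <= v -> RInt (fun x => 2 * exp (- (x / 2))) 1 v <= 4.
Proof. intros Hv.
 assert (H : is_RInt (fun x => 2 * exp (- (x / 2))) 1 v ((fun x => - 4 * exp (- (x / 2))) v - (fun x => - 4 * exp (- (x / 2))) 1)).
 { apply (is_RInt_derive (V := R_CompleteNormedModule) (fun x => - 4 * exp (- (x / 2)))).
   - intros x _. auto_derive; auto. unfold Rdiv; field.
   - intros x _. apply continuity_pt_filterlim. apply derivable_continuous_pt. reg. }
 rewrite (is_RInt_unique _ _ _ _ H). simpl. pose proof (exp_pos (- (v/2))). pose proof (exp_pos (- (1/2))).
 assert (exp (- (1 / 2)) <= 1) by (apply Rle_trans with (exp 0); [apply exp_le_mono; lra | rewrite exp_0; lra]). lra. Qed.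

Lemma Gamma_exists c : 0 < c < 1 ->
  is_RInt_gen (g c) (at_right 0) (Rbar_locally p_infty) (Gamma (1 + c)).
Proof. intros Hc.
 destruct (impr_zero (g c) 1 1) as [l1 [H1 _]].
 - lra.
 - intros; apply g_ex; auto.
 - intros; left; apply g_pos.
 - intros u Hu. apply Rle_trans with (RInt (fun _ => 1) u 1).
   apply RInt_le; try lra. apply g_ex; lra. apply ex_RInt_const.
   intros x Hx; apply g_le1; lra. rewrite RInt_const. simpl. unfold scal; simpl; unfold mult; simpl. nra.
 - destruct (impr_infty (g c) 1 4) as [l2 [H2 _]].
   + intros; apply g_ex; lra.
   + intros; left; apply g_pos.
   + intros v Hv. apply Rle_trans with (RInt (fun x => 2 * exp (- (x / 2))) 1 v).
     apply RInt_le; auto. apply g_ex; lra. apply (ex_RInt_continuous (V := R_CompleteNormedModule)). intros z _.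
     apply continuity_pt_filterlim. apply derivable_continuous_pt. reg.
     intros x Hx; apply g_le_exp; lra. apply int_exp_half; auto.
   + pose proof (is_RInt_gen_Chasles (g c) 1 l1 l2 H1 H2) as H.
     unfold Gamma. replace (1 + c - 1) with c by ring.
     rewrite (is_RInt_gen_unique (fun s => Rpower s c * exp (- s)) (plus l1 l2)).
     exact H.
     exact H.
Qed.

Lemma gen_extract f l : is_RInt_gen f (at_right 0) (Rbar_locally p_infty) l ->
  forall eps, 0 < eps -> exists e0, 0 < e0 /\ exists Y, forall u v, 0 < u < e0 -> Y < v ->
    exists I, is_RInt f u v I /\ Rabs (I - l) < eps.
Proof. intros H eps He.
 assert (Hb : locally l (ball l (mkposreal eps He))) by apply locally_ball.
 specialize (H _ Hb). destruct H as [Q R HQ HR HQR].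
 destruct HQ as [d Hd]. destruct HR as [Y HY].
 exists d. split. apply cond_pos. exists Y. intros u v Hu Hv.
 destruct (HQR u v) as [I [HI HIb]].
 - apply Hd; [|lra]. change (Rabs (u - 0) < d). rewrite Rabs_right; lra.
 - apply HY; auto.
 - exists I. split; auto.
Qed.

Lemma g_RInt_mono c u' u v v' : 0 < u' -> u' <= u -> u <= v -> v <= v' ->
  RInt (g c) u v <= RInt (g c) u' v'.
Proof. intros.
 assert (E1 : RInt (g c) u' u + RInt (g c) u v' = RInt (g c) u' v') by (apply (RInt_Chasles (g c)); apply g_ex; lra).
 assert (E2 : RInt (g c) u v + RInt (g c) v v' = RInt (g c) u v') by (apply (RInt_Chasles (g c)); apply g_ex; lra).
 assert (0 <= RInt (g c) u' u) by (apply RInt_ge_0; [lra|apply g_ex; lra|intros; left; apply g_pos]).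
 assert (0 <= RInt (g c) v v') by (apply RInt_ge_0; [lra|apply g_ex; lra|intros; left; apply g_pos]).
 lra. Qed.

Lemma Gamma_le c u v : 0 < c < 1 -> 0 < u -> u <= v -> RInt (g c) u v <= Gamma (1 + c).
Proof. intros Hc Hu Huv. apply le_epsilon. intros eps He.
 destruct (gen_extract _ _ (Gamma_exists c Hc) eps He) as [e0 [He0 [Y HY]]].
 set (u' := Rmin u e0 / 2). set (v' := Rmax v Y + 1).
 assert (0 < Rmin u e0) by (apply Rmin_pos; auto).
 assert (Rmin u e0 <= u) by apply Rmin_l. assert (Rmin u e0 <= e0) by apply Rmin_r.
 assert (v <= Rmax v Y) by apply Rmax_l. assert (Y <= Rmax v Y) by apply Rmax_r.
 destruct (HY u' v') as [I [HI HIl]]. unfold u'; lra. unfold v'; lra.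
 pose proof (g_RInt_mono c u' u v v' ltac:(unfold u'; lra) ltac:(unfold u'; lra) Huv ltac:(unfold v'; lra)) as Hm.
 rewrite (is_RInt_unique _ _ _ _ HI) in Hm.
 apply Rabs_lt_between in HIl. lra. Qed.

Lemma Gamma_approx c : 0 < c < 1 -> forall eta, 0 < eta -> exists e0, 0 < e0 /\ exists Y,
  forall u v, 0 < u < e0 -> Y < v -> Gamma (1 + c) - eta <= RInt (g c) u v.
Proof. intros Hc eta He.
 destruct (gen_extract _ _ (Gamma_exists c Hc) eta He) as [e0 [He0 [Y HY]]].
 exists e0; split; auto. exists Y. intros u v Hu Hv.
 destruct (HY u v Hu Hv) as [I [HI HIl]]. rewrite (is_RInt_unique _ _ _ _ HI).
 apply Rabs_lt_between in HIl. lra. Qed.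

Lemma Gamma_pos c : 0 < c < 1 -> 0 < Gamma (1 + c).
Proof. intros Hc. apply Rlt_le_trans with (RInt (g c) 1 2); [|apply Gamma_le; lra].
 apply Rlt_le_trans with (RInt (fun _ => exp (-2)) 1 2).
 rewrite RInt_const. simpl. unfold scal; simpl; unfold mult; simpl. pose proof (exp_pos (-2)). lra.
 apply RInt_le. lra. apply ex_RInt_const. apply g_ex; lra.
 intros x Hx. unfold g. assert (1 <= Rpower x c) by (rewrite <- (Rpower_one_base c); apply Rle_Rpower_l; lra).
 assert (exp (-2) <= exp (- x)) by (apply exp_le_mono; lra). pose proof (exp_pos (-2)). nra. Qed.

Definition Ee d k := exp (- (INR k * d)).

Lemma Ee_add d a b : Ee d (a + b) = Ee d a * Ee d b.
Proof. unfold Ee. rewrite <- exp_plus, plus_INR. f_equal. ring. Qed.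

Lemma Ee_pos d k : 0 < Ee d k.
Proof. apply exp_pos. Qed.

Lemma Ee_le1 d k : 0 <= d -> Ee d k <= 1.
Proof. intros. unfold Ee. apply Rle_trans with (exp 0). apply exp_le_mono.
 pose proof (pos_INR k). nra. rewrite exp_0; lra. Qed.

Definition Wg c d M := sum_lt (fun p => bw c (S p) * Ee d (S p)) M.
Definition Tg A B d N := sum_lt (fun j => Kk A B (S j) * Ee d (S (S j))) N.
Definition Sg c d M := sum_lt (fun p => g c (INR (S p) * d)) M.

Lemma Wg_nonneg c d M : 0 < c -> 0 <= Wg c d M.
Proof. intros. apply sum_lt_nonneg. intros. apply Rmult_le_pos. apply bw_nonneg; auto. left; apply Ee_pos. Qed.

Lemma Wg_mono c d M M' : 0 < c -> (M <= M')%nat -> Wg c d M <= Wg c d M'.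
Proof. intros. apply sum_lt_mono; auto. intros. apply Rmult_le_pos. apply bw_nonneg; auto. left; apply Ee_pos. Qed.

Lemma Tg_split A B d N :
  Tg A B d N = sum_lt (fun q => bw B (S q) * Ee d (S q) * Wg A d (N - q)) N.
Proof.
 unfold Tg, Wg.
 rewrite (sum_lt_ext _ (fun j => sum_lt (fun q => (fun q p => bw B (S q) * Ee d (S q) * (bw A (S p) * Ee d (S p))) q (j - q)%nat) (S j))).
 - rewrite (sum_lt_tri (fun q p => bw B (S q) * Ee d (S q) * (bw A (S p) * Ee d (S p))) N). apply sum_lt_ext. intros q Hq. rewrite <- sum_lt_scal. reflexivity.
 - intros j Hj. unfold Kk. rewrite Rmult_comm, <- sum_lt_scal. apply sum_lt_ext. intros q Hq.
   replace (S j - q)%nat with (S (j - q)) by lia.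
   replace (S (S j)) with (S q + S (j - q))%nat by lia. rewrite Ee_add. ring.
Qed.

Lemma Tg_upper A B d N : 0 < A -> 0 < B -> Tg A B d N <= Wg B d N * Wg A d N.
Proof. intros HA HB. rewrite Tg_split. change (Wg B d N) with (sum_lt (fun q => bw B (S q) * Ee d (S q)) N). rewrite Rmult_comm, <- sum_lt_scal.
 apply sum_lt_le. intros q Hq. rewrite Rmult_comm.
 assert (0 <= bw B (S q) * Ee d (S q)) by (apply Rmult_le_pos; [apply bw_nonneg; auto|left; apply Ee_pos]).
 pose proof (Wg_mono A d (N - q) N HA ltac:(lia)). nra. Qed.

Lemma Tg_lower A B d M : 0 < A -> 0 < B -> Wg B d M * Wg A d M <= Tg A B d (M + M).
Proof. intros HA HB. rewrite Tg_split.
 apply Rle_trans with (sum_lt (fun q => bw B (S q) * Ee d (S q) * Wg A d (M + M - q)) M).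
 - change (Wg B d M) with (sum_lt (fun q => bw B (S q) * Ee d (S q)) M). rewrite Rmult_comm, <- sum_lt_scal. apply sum_lt_le. intros q Hq. rewrite Rmult_comm.
   assert (0 <= bw B (S q) * Ee d (S q)) by (apply Rmult_le_pos; [apply bw_nonneg; auto|left; apply Ee_pos]).
   pose proof (Wg_mono A d M (M + M - q) HA ltac:(lia)). nra.
 - apply sum_lt_mono. lia. intros. apply Rmult_le_pos. apply Rmult_le_pos. apply bw_nonneg; auto. left; apply Ee_pos.
   apply Wg_nonneg; auto.
Qed.

Lemma Wg_parts c d M : Wg c d M =
  (1 - Ee d 1) * sum_lt (fun p => P c (S p) * Ee d (S p)) M + P c M * Ee d (S M).
Proof. induction M.
 - unfold Wg. simpl. rewrite P_0. ring.
 - unfold Wg in *. simpl sum_lt. rewrite IHM. rewrite bw_S.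
   replace (S (S M)) with (1 + S M)%nat by lia. rewrite Ee_add. ring. Qed.

Lemma PE_g c d p : 0 < d -> P c (S p) * Ee d (S p) = g c (INR (S p) * d) / Rpower d c.
Proof. intros Hd. unfold P, g, Ee. rewrite rpow_pos by (apply INR_pos1; lia).
 rewrite <- Rpower_mult_distr by (try (apply INR_pos1; lia); lra).
 pose proof (Rpower_pos d c). field. lra. Qed.

Lemma sum_PE c d M : 0 < d -> sum_lt (fun p => P c (S p) * Ee d (S p)) M = Sg c d M / Rpower d c.
Proof. intros Hd. unfold Sg, Rdiv. rewrite Rmult_comm, <- sum_lt_scal. apply sum_lt_ext. intros.
 rewrite PE_g by auto. unfold Rdiv. ring. Qed.

Lemma geom_E d N : sum_lt (fun j => Ee d (S (S j))) N * (1 - Ee d 1) = Ee d 2 - Ee d (S (S N)).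
Proof. induction N. simpl. ring.
 simpl sum_lt. rewrite Rmult_plus_distr_r, IHN.
 replace (S (S (S N))) with (1 + S (S N))%nat by lia. rewrite Ee_add. ring. Qed.

Lemma RInt_const_R a b k : RInt (fun _ => k) a b = k * (b - a).
Proof. rewrite RInt_const. unfold scal; simpl; unfold mult; simpl. ring. Qed.

Lemma g_interval_bounds c d p x : 0 < c < 1 -> 0 < d ->
  INR (S p) * d <= x <= INR (S (S p)) * d ->
  exp (- d) * g c (INR (S p) * d) <= g c x /\ g c x <= exp d * g c (INR (S (S p)) * d).
Proof. intros Hc Hd Hx. rewrite S_INR with (n := S p) in *. set (a := INR (S p) * d) in *.
 assert (Ha : 0 < a) by (unfold a; apply Rmult_lt_0_compat; [apply INR_pos1; lia|lra]).
 replace ((INR (S p) + 1) * d) with (a + d) in * by (unfold a; ring).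
 unfold g. split.
 - assert (Rpower a c <= Rpower x c) by (apply Rle_Rpower_l; lra).
   assert (exp (- d) * exp (- a) <= exp (- x)) by (rewrite <- exp_plus; apply exp_le_mono; lra).
   pose proof (Rpower_pos a c). pose proof (exp_pos (-d)). pose proof (exp_pos (-a)). pose proof (exp_pos (-x)). nra.
 - assert (Rpower x c <= Rpower (a + d) c) by (apply Rle_Rpower_l; lra).
   assert (exp (- x) <= exp d * exp (- (a + d))) by (rewrite <- exp_plus; apply exp_le_mono; lra).
   pose proof (Rpower_pos x c). pose proof (exp_pos d). pose proof (exp_pos (-(a+d))). pose proof (exp_pos (-x)). nra.
Qed.

Lemma pos_pt p d : 0 < d -> 0 < INR (S p) * d.
Proof. intros. apply Rmult_lt_0_compat; auto. apply INR_pos1; lia. Qed.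

Lemma width p d : INR (S (S p)) * d - INR (S p) * d = d.
Proof. rewrite (S_INR (S p)). ring. Qed.

Lemma RInt_piece_up c d p : 0 < c < 1 -> 0 < d ->
  d * g c (INR (S p) * d) <= exp d * RInt (g c) (INR (S p) * d) (INR (S (S p)) * d).
Proof. intros Hc Hd.
 assert (H : RInt (fun _ => exp (- d) * g c (INR (S p) * d)) (INR (S p) * d) (INR (S (S p)) * d) <= RInt (g c) (INR (S p) * d) (INR (S (S p)) * d)).
 { apply RInt_le. pose proof (width p d); lra. apply ex_RInt_const. apply g_ex; apply pos_pt; auto.
   intros x Hx. apply (g_interval_bounds c d p x); auto; lra. }
 rewrite RInt_const_R, width in H. pose proof (exp_pos d).
 assert (E : exp d * exp (- d) = 1) by (rewrite <- exp_plus; replace (d + - d) with 0 by ring; apply exp_0).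
 assert (exp d * (d * (exp (- d) * g c (INR (S p) * d))) <= exp d * RInt (g c) (INR (S p) * d) (INR (S (S p)) * d)) by (apply Rmult_le_compat_l; lra).
 replace (exp d * (d * (exp (- d) * g c (INR (S p) * d)))) with (d * g c (INR (S p) * d) * (exp d * exp (- d))) in H1 by ring.
 rewrite E in H1. lra. Qed.

Lemma RInt_piece_low c d p : 0 < c < 1 -> 0 < d ->
  exp (- d) * RInt (g c) (INR (S p) * d) (INR (S (S p)) * d) <= d * g c (INR (S (S p)) * d).
Proof. intros Hc Hd.
 assert (H : RInt (g c) (INR (S p) * d) (INR (S (S p)) * d) <= RInt (fun _ => exp d * g c (INR (S (S p)) * d)) (INR (S p) * d) (INR (S (S p)) * d)).
 { apply RInt_le. pose proof (width p d); lra. apply g_ex; apply pos_pt; auto. apply ex_RInt_const.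
   intros x Hx. apply (g_interval_bounds c d p x); auto; lra. }
 rewrite RInt_const_R, width in H. pose proof (exp_pos (- d)).
 assert (E : exp (- d) * exp d = 1) by (rewrite <- exp_plus; replace (- d + d) with 0 by ring; apply exp_0).
 assert (exp (- d) * RInt (g c) (INR (S p) * d) (INR (S (S p)) * d) <= exp (- d) * (d * (exp d * g c (INR (S (S p)) * d)))) by (apply Rmult_le_compat_l; lra).
 replace (exp (- d) * (d * (exp d * g c (INR (S (S p)) * d)))) with (d * g c (INR (S (S p)) * d) * (exp (- d) * exp d)) in H1 by ring.
 rewrite E in H1. lra. Qed.

Lemma chasles_sum c d M : 0 < d ->
  sum_lt (fun p => RInt (g c) (INR (S p) * d) (INR (S (S p)) * d)) M = RInt (g c) d (INR (S M) * d).
Proof. intros Hd. induction M.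
 - simpl. replace (1 * d) with d by ring. rewrite RInt_point. reflexivity.
 - rewrite sum_lt_S, IHM.
   apply (RInt_Chasles (V := R_CompleteNormedModule) (g c)); apply g_ex; try apply pos_pt; auto.
Qed.

Lemma Riem_up c d M : 0 < c < 1 -> 0 < d -> d * Sg c d M <= exp d * Gamma (1 + c).
Proof. intros Hc Hd. unfold Sg. rewrite <- sum_lt_scal.
 apply Rle_trans with (exp d * RInt (g c) d (INR (S M) * d)).
 - rewrite <- chasles_sum by auto. rewrite <- sum_lt_scal. apply sum_lt_le. intros p _. apply RInt_piece_up; auto.
 - apply Rmult_le_compat_l. left; apply exp_pos. apply Gamma_le; auto.
   rewrite S_INR. pose proof (pos_INR M). nra. Qed.

Lemma Riem_low c d M : 0 < c < 1 -> 0 < d -> exp (- d) * RInt (g c) d (INR (S M) * d) <= d * Sg c d (S M).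
Proof. intros Hc Hd. unfold Sg. replace (S M) with (1 + M)%nat at 2 by lia. rewrite sum_lt_app.
 rewrite Rmult_plus_distr_l. rewrite <- chasles_sum by auto.
 rewrite <- sum_lt_scal. rewrite <- (sum_lt_scal d).
 assert (0 <= d * sum_lt (fun p => g c (INR (S p) * d)) 1) by (apply Rmult_le_pos; [lra|apply sum_lt_nonneg; intros; left; apply g_pos]).
 assert (sum_lt (fun i => exp (- d) * RInt (g c) (INR (S i) * d) (INR (S (S i)) * d)) M <=
   sum_lt (fun i => d * g c (INR (S (1 + i)) * d)) M) by (apply sum_lt_le; intros; apply RInt_piece_low; auto).
 rewrite !sum_lt_scal in *. lra. Qed.

Lemma exp_neg_ge x : 1 - x <= exp (- x).
Proof. pose proof (exp_ineq1_le (- x)). lra. Qed.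

Lemma exp_small x : 0 <= x <= 1 / 2 -> exp x <= 1 + 2 * x.
Proof. intros Hx. pose proof (exp_neg_ge x).
 assert (E : exp x * exp (- x) = 1) by (rewrite <- exp_plus; replace (x + - x) with 0 by ring; apply exp_0).
 pose proof (exp_pos x). nra. Qed.

Lemma E1_eq d : Ee d 1 = exp (- d).
Proof. unfold Ee. simpl. f_equal. ring. Qed.

Lemma oneminusE_le d : 1 - Ee d 1 <= d.
Proof. rewrite E1_eq. pose proof (exp_neg_ge d). lra. Qed.

Lemma oneminusE_ge d : d * exp (- d) <= 1 - Ee d 1.
Proof. rewrite E1_eq. pose proof (exp_ineq1_le d).
 assert (E : exp d * exp (- d) = 1) by (rewrite <- exp_plus; replace (d + - d) with 0 by ring; apply exp_0).
 pose proof (exp_pos (- d)). nra. Qed.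

Lemma lim_lemma a b K d0 : 0 < d0 -> (forall d, 0 < d <= d0 -> a <= b + d * K) -> a <= b.
Proof. intros Hd0 H. destruct (Rle_lt_dec a b) as [|Hab]; auto. exfalso.
 set (d := Rmin d0 ((a - b) / (2 * (Rabs K + 1)))).
 assert (HK : 0 < 2 * (Rabs K + 1)) by (pose proof (Rabs_pos K); lra).
 assert (Hq : 0 < (a - b) / (2 * (Rabs K + 1))) by (apply Rdiv_lt_0_compat; lra).
 assert (Hd : 0 < d) by (apply Rmin_pos; auto).
 assert (Hd1 : d <= d0) by apply Rmin_l. assert (Hd2 : d <= (a - b) / (2 * (Rabs K + 1))) by apply Rmin_r.
 specialize (H d (conj Hd Hd1)).
 assert (d * K <= d * Rabs K) by (apply Rmult_le_compat_l; [lra|apply Rle_abs]).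
 assert (d * (2 * (Rabs K + 1)) <= a - b).
 { apply Rmult_le_reg_r with (/ (2 * (Rabs K + 1))). apply Rinv_0_lt_compat; auto.
   rewrite Rmult_assoc, Rinv_r by lra. unfold Rdiv in Hd2. lra. }
 pose proof (Rabs_pos K). nra. Qed.

Lemma g_big c x d : 0 < c < 1 -> 0 < d <= 1 / 2 -> 4 / d <= x -> g c x <= d.
Proof. intros Hc Hd Hx.
 assert (H4 : 4 / d >= 8) by (apply Rle_ge; apply Rmult_le_reg_r with d; [lra|]; unfold Rdiv; rewrite Rmult_assoc, Rinv_l by lra; lra).
 pose proof (g_le_exp c x Hc ltac:(lra)).
 pose proof (exp_ineq1_le (x / 2)).
 assert (E2 : exp (x / 2) * exp (- (x / 2)) = 1) by (rewrite <- exp_plus; replace (x / 2 + - (x / 2)) with 0 by ring; apply exp_0).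
 assert (2 / d <= 1 + x / 2).
 { assert (4 / d = 2 * (2 / d)) by (field; lra). lra. }
 assert (Hdd : d * (2 / d) = 2) by (field; lra).
 pose proof (exp_pos (- (x / 2))). nra. Qed.

Lemma Wg_up c d N : 0 < c < 1 -> 0 < d <= 1 / 2 -> (1 <= N)%nat -> 4 / d <= INR N * d ->
  Wg c d N * Rpower d c <= exp d * Gamma (1 + c) + d.
Proof. intros Hc Hd HN Hx.
 rewrite Wg_parts, sum_PE by lra.
 pose proof (Rpower_pos d c).
 assert (E : ((1 - Ee d 1) * (Sg c d N / Rpower d c) + P c N * Ee d (S N)) * Rpower d c =
   (1 - Ee d 1) * Sg c d N + P c N * Rpower d c * Ee d (S N)) by (field; lra).
 rewrite E.
 assert (S0 : 0 <= Sg c d N) by (apply sum_lt_nonneg; intros; left; apply g_pos).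
 pose proof (oneminusE_le d). pose proof (Riem_up c d N Hc ltac:(lra)).
 assert (T1 : (1 - Ee d 1) * Sg c d N <= exp d * Gamma (1 + c)) by nra.
 assert (T2 : P c N * Rpower d c * Ee d (S N) <= g c (INR N * d)).
 { unfold P, g. rewrite rpow_pos by (apply INR_pos1; auto).
   rewrite Rpower_mult_distr by (try (apply INR_pos1; auto); lra).
   assert (Ee d (S N) <= exp (- (INR N * d))) by (unfold Ee; apply exp_le_mono; rewrite S_INR; lra).
   pose proof (Rpower_pos (INR N * d) c). nra. }
 pose proof (g_big c (INR N * d) d Hc Hd Hx). lra. Qed.

Lemma Wg_lo c d n : 0 < c < 1 -> 0 < d ->
  exp (- d) * exp (- d) * RInt (g c) d (INR (S n) * d) <= Wg c d (S n) * Rpower d c.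
Proof. intros Hc Hd.
 rewrite Wg_parts, sum_PE by lra.
 pose proof (Rpower_pos d c).
 assert (E : ((1 - Ee d 1) * (Sg c d (S n) / Rpower d c) + P c (S n) * Ee d (S (S n))) * Rpower d c =
   (1 - Ee d 1) * Sg c d (S n) + P c (S n) * Rpower d c * Ee d (S (S n))) by (field; lra).
 rewrite E.
 assert (0 <= P c (S n) * Rpower d c * Ee d (S (S n))) by (apply Rmult_le_pos; [apply Rmult_le_pos; [apply P_nonneg|lra]|left; apply Ee_pos]).
 assert (S0 : 0 <= Sg c d (S n)) by (apply sum_lt_nonneg; intros; left; apply g_pos).
 pose proof (oneminusE_ge d). pose proof (Riem_low c d n Hc Hd).
 pose proof (exp_pos (- d)).
 assert (d * exp (- d) * Sg c d (S n) <= (1 - Ee d 1) * Sg c d (S n)) by (apply Rmult_le_compat_r; auto).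
 assert (exp (- d) * (exp (- d) * RInt (g c) d (INR (S n) * d)) <= exp (- d) * (d * Sg c d (S n))) by (apply Rmult_le_compat_l; lra).
 nra. Qed.

Lemma Rpower_AB d A B : 0 < d -> A + B = 1 -> Rpower d A * Rpower d B = d.
Proof. intros. rewrite <- Rpower_plus, H0. apply Rpower_1; auto. Qed.

Lemma L_upper A B L : 0 < A < 1 -> 0 < B < 1 -> A + B = 1 -> 0 <= L ->
  (forall j, (1 <= j)%nat -> L <= Kk A B j) -> L <= Gamma (1 + A) * Gamma (1 + B).
Proof. intros HA HB HAB HL HK.
 pose proof (Gamma_pos A HA) as GA. pose proof (Gamma_pos B HB) as GB.
 set (a := Gamma (1 + A)) in *. set (b := Gamma (1 + B)) in *.
 apply (lim_lemma _ _ (3 * L + (2 * a + 1) * b + (2 * b + 1) * a + (2 * a + 1) * (2 * b + 1)) (1 / 2)). lra.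
 intros d Hd.
 destruct (INR_archimed d (4 / d) ltac:(lra)) as [N HN].
 assert (HN1 : (1 <= N)%nat).
 { destruct N. simpl in HN. assert (0 < 4 / d) by (apply Rdiv_lt_0_compat; lra). lra. lia. }
 set (T := Tg A B d N).
 assert (Ha : L * sum_lt (fun j => Ee d (S (S j))) N <= T).
 { unfold T, Tg. rewrite <- sum_lt_scal. apply sum_lt_le. intros j Hj.
   pose proof (HK (S j) ltac:(lia)). pose proof (Ee_pos d (S (S j))). nra. }
 pose proof (geom_E d N) as HG.
 pose proof (oneminusE_le d). pose proof (oneminusE_ge d). pose proof (exp_pos (- d)).
 assert (H1E : 0 <= 1 - Ee d 1) by nra.
 assert (Hb : T <= Wg B d N * Wg A d N) by (apply Tg_upper; lra).
 pose proof (Wg_up A d N HA Hd HN1 ltac:(lra)) as WA. pose proof (Wg_up B d N HB Hd HN1 ltac:(lra)) as WB.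
 pose proof (Wg_nonneg A d N ltac:(lra)). pose proof (Wg_nonneg B d N ltac:(lra)).
 pose proof (Rpower_AB d A B ltac:(lra) HAB) as Hdd.
 assert (Hx : 1 / d <= INR N * d).
 { assert (4 / d = 4 * (1 / d)) by (field; lra). assert (0 < 1 / d) by (apply Rdiv_lt_0_compat; lra). lra. }
 assert (HEN : Ee d (S (S N)) <= d).
 { unfold Ee. apply Rle_trans with (exp (- (INR N * d))). apply exp_le_mono. rewrite !S_INR; lra.
   pose proof (exp_ineq1_le (INR N * d)).
   assert (E : exp (INR N * d) * exp (- (INR N * d)) = 1) by (rewrite <- exp_plus; replace (INR N * d + - (INR N * d)) with 0 by ring; apply exp_0).
   assert (Hd1 : d * (1 / d) = 1) by (field; lra). pose proof (exp_pos (- (INR N * d))).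
   assert (HH7 : exp (- (INR N * d)) * (d * (1 / d)) <= exp (- (INR N * d)) * (d * exp (INR N * d))).
   { apply Rmult_le_compat_l; [lra|]. apply Rmult_le_compat_l; lra. }
   rewrite Hd1 in HH7. replace (exp (- (INR N * d)) * (d * exp (INR N * d))) with (d * (exp (INR N * d) * exp (- (INR N * d)))) in HH7 by ring. rewrite E in HH7. lra. }
 assert (HE2 : 1 - 2 * d <= Ee d 2) by (unfold Ee; simpl; replace ((1 + 1) * d) with (2 * d) by ring; apply exp_neg_ge).
 assert (Hexp : exp d <= 1 + 2 * d) by (apply exp_small; lra).
 assert (C1 : L * (1 - 3 * d) <= (1 - Ee d 1) * T).
 { assert (L * (1 - 3 * d) <= L * (Ee d 2 - Ee d (S (S N)))) by (apply Rmult_le_compat_l; lra).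
   assert (L * (Ee d 2 - Ee d (S (S N))) = (1 - Ee d 1) * (L * sum_lt (fun j => Ee d (S (S j))) N)) by (rewrite <- HG; ring).
   assert ((1 - Ee d 1) * (L * sum_lt (fun j => Ee d (S (S j))) N) <= (1 - Ee d 1) * T) by (apply Rmult_le_compat_l; auto).
   lra. }
 assert (C2 : (1 - Ee d 1) * T <= d * (Wg B d N * Wg A d N)).
 { apply Rle_trans with (d * T). apply Rmult_le_compat_r; [|lra].
   unfold T; apply Rle_trans with (L * sum_lt (fun j => Ee d (S (S j))) N); auto.
   apply Rmult_le_pos; auto. apply sum_lt_nonneg; intros; left; apply Ee_pos.
   apply Rmult_le_compat_l; lra. }
 assert (C3 : d * (Wg B d N * Wg A d N) = (Wg B d N * Rpower d B) * (Wg A d N * Rpower d A)).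
 { transitivity ((Rpower d A * Rpower d B) * (Wg B d N * Wg A d N)). rewrite Hdd; reflexivity. ring. }
 assert (C4 : (Wg B d N * Rpower d B) * (Wg A d N * Rpower d A) <= (exp d * b + d) * (exp d * a + d)).
 { apply Rmult_le_compat; auto. apply Rmult_le_pos; auto; left; apply Rpower_pos. apply Rmult_le_pos; auto; left; apply Rpower_pos. }
 assert (C5 : (exp d * b + d) * (exp d * a + d) <= ((1 + 2 * d) * b + d) * ((1 + 2 * d) * a + d)).
 { pose proof (exp_pos d). apply Rmult_le_compat; nra. }
 assert (Hd2 : d * d <= d) by nra.
 assert (((1 + 2 * d) * b + d) * ((1 + 2 * d) * a + d) <= a * b + d * ((2 * a + 1) * b + (2 * b + 1) * a + (2 * a + 1) * (2 * b + 1))).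
 { assert (((1 + 2 * d) * b + d) * ((1 + 2 * d) * a + d) = a * b + d * ((2 * a + 1) * b + (2 * b + 1) * a) + d * d * ((2 * a + 1) * (2 * b + 1))) by ring.
   assert (d * d * ((2 * a + 1) * (2 * b + 1)) <= d * ((2 * a + 1) * (2 * b + 1))) by (apply Rmult_le_compat_r; nra). lra. }
 nra. Qed.

Lemma sum_ind N J : sum_lt (fun j => if Nat.ltb j J then 1 else 0) N <= INR J.
Proof.
 assert (H1 : forall N, sum_lt (fun j => if Nat.ltb j J then 1 else 0) N <= INR N).
 { induction N0. simpl; lra. rewrite sum_lt_S, S_INR. destruct (Nat.ltb N0 J); lra. }
 induction N. simpl. apply pos_INR.
 rewrite sum_lt_S. destruct (Nat.ltb N J) eqn:E.
 - apply Nat.ltb_lt in E. specialize (H1 N). assert (INR N + 1 <= INR J) by (rewrite <- S_INR; apply le_INR; lia). lra.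
 - lra. Qed.

Lemma Tg_ind A B d N J L eps : 0 < A < 1 -> 0 < B < 1 -> 0 <= L + eps -> 0 <= d ->
  (forall j, (1 <= j)%nat -> Kk A B j <= 1) -> (forall j, (J <= j)%nat -> Kk A B j <= L + eps) ->
  Tg A B d N <= INR J + (L + eps) * sum_lt (fun j => Ee d (S (S j))) N.
Proof. intros HA HB HLe Hd H1 HJ.
 apply Rle_trans with (sum_lt (fun j => (if Nat.ltb j J then 1 else 0) + (L + eps) * Ee d (S (S j))) N).
 - apply sum_lt_le. intros j Hj. pose proof (Kk_nonneg A B (S j) ltac:(lra) ltac:(lra)).
   pose proof (Ee_pos d (S (S j))). pose proof (Ee_le1 d (S (S j)) Hd).
   destruct (Nat.ltb j J) eqn:E.
   + pose proof (H1 (S j) ltac:(lia)). assert (0 <= (L + eps) * Ee d (S (S j))) by nra. nra.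
   + apply Nat.ltb_ge in E. pose proof (HJ (S j) ltac:(lia)). nra.
 - rewrite sum_lt_plus, sum_lt_scal. pose proof (sum_ind N J). lra.
Qed.

Lemma L_lower A B L : 0 < A < 1 -> 0 < B < 1 -> A + B = 1 -> 0 <= L ->
  (forall j, (1 <= j)%nat -> Kk A B j <= 1) ->
  (forall eps, 0 < eps -> exists J, forall j, (J <= j)%nat -> Kk A B j <= L + eps) ->
  Gamma (1 + A) * Gamma (1 + B) <= L.
Proof. intros HA HB HAB HL H1 HJ.
 pose proof (Gamma_pos A HA) as GA. pose proof (Gamma_pos B HB) as GB.
 set (a := Gamma (1 + A)) in *. set (b := Gamma (1 + B)) in *.
 assert (Key : forall eta, 0 < eta -> eta <= Rmin a b -> (a - eta) * (b - eta) <= L).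
 { intros eta He Heb. assert (eta <= a) by (pose proof (Rmin_l a b); lra).
   assert (eta <= b) by (pose proof (Rmin_r a b); lra).
   apply le_epsilon. intros eps Heps.
   destruct (HJ eps Heps) as [J HJ'].
   destruct (Gamma_approx A HA eta He) as [eA [HeA [YA HYA]]].
   destruct (Gamma_approx B HB eta He) as [eB [HeB [YB HYB]]].
   fold a in HYA. fold b in HYB.
   set (PP := (a - eta) * (b - eta)).
   assert (HPP : 0 <= PP) by (unfold PP; apply Rmult_le_pos; lra).
   apply (lim_lemma _ _ (4 * PP + INR J + 2 * (L + eps)) (Rmin (1 / 2) (Rmin (eA / 2) (eB / 2)))).
   { apply Rmin_pos; [lra|apply Rmin_pos; lra]. }
   intros d Hd.
   assert (Hd1 : d <= 1 / 2) by (pose proof (Rmin_l (1/2) (Rmin (eA / 2) (eB / 2))); lra).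
   assert (Hd2 : d <= eA / 2) by (pose proof (Rmin_r (1/2) (Rmin (eA / 2) (eB / 2))); pose proof (Rmin_l (eA / 2) (eB / 2)); lra).
   assert (Hd3 : d <= eB / 2) by (pose proof (Rmin_r (1/2) (Rmin (eA / 2) (eB / 2))); pose proof (Rmin_r (eA / 2) (eB / 2)); lra).
   destruct (INR_archimed d (Rmax YA YB) ltac:(lra)) as [n Hn].
   assert (HM : Rmax YA YB < INR (S n) * d) by (rewrite S_INR; lra).
   assert (HYA' : YA < INR (S n) * d) by (pose proof (Rmax_l YA YB); lra).
   assert (HYB' : YB < INR (S n) * d) by (pose proof (Rmax_r YA YB); lra).
   pose proof (HYA d (INR (S n) * d) ltac:(lra) HYA') as RA.
   pose proof (HYB d (INR (S n) * d) ltac:(lra) HYB') as RB.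
   pose proof (Wg_lo A d n HA ltac:(lra)) as WA. pose proof (Wg_lo B d n HB ltac:(lra)) as WB.
   pose proof (exp_pos (- d)) as Hem.
   set (q := exp (- d) * exp (- d)) in *.
   assert (Hq : 1 - 2 * d <= q) by (unfold q; pose proof (exp_neg_ge d); nra).
   assert (Hq0 : 0 < q) by (unfold q; nra).
   assert (WA' : q * (a - eta) <= Wg A d (S n) * Rpower d A) by (apply Rle_trans with (q * RInt (g A) d (INR (S n) * d)); [apply Rmult_le_compat_l; lra|auto]).
   assert (WB' : q * (b - eta) <= Wg B d (S n) * Rpower d B) by (apply Rle_trans with (q * RInt (g B) d (INR (S n) * d)); [apply Rmult_le_compat_l; lra|auto]).
   pose proof (Rpower_AB d A B ltac:(lra) HAB) as Hdd.
   set (T := Tg A B d (S n + S n)).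
   assert (Tlow : Wg B d (S n) * Wg A d (S n) <= T) by (apply Tg_lower; lra).
   assert (C1 : q * q * PP <= d * T).
   { assert (E : d * (Wg B d (S n) * Wg A d (S n)) = (Wg B d (S n) * Rpower d B) * (Wg A d (S n) * Rpower d A)).
     { transitivity ((Rpower d A * Rpower d B) * (Wg B d (S n) * Wg A d (S n))). rewrite Hdd; reflexivity. ring. }
     assert (q * q * PP = (q * (b - eta)) * (q * (a - eta))) by (unfold PP; ring).
     assert ((q * (b - eta)) * (q * (a - eta)) <= (Wg B d (S n) * Rpower d B) * (Wg A d (S n) * Rpower d A)).
     { apply Rmult_le_compat; auto; apply Rmult_le_pos; lra. }
     assert (d * (Wg B d (S n) * Wg A d (S n)) <= d * T) by (apply Rmult_le_compat_l; lra).
     lra. }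
   set (Sm := sum_lt (fun j => Ee d (S (S j))) (S n + S n)).
   assert (Tup : T <= INR J + (L + eps) * Sm) by (apply Tg_ind; auto; lra).
   assert (HS : d * Sm <= exp d).
   { pose proof (geom_E d (S n + S n)) as HG. fold Sm in HG.
     pose proof (oneminusE_ge d). pose proof (Ee_le1 d 2 ltac:(lra)). pose proof (Ee_pos d (S (S (S n + S n)))).
     assert (Sm0 : 0 <= Sm) by (apply sum_lt_nonneg; intros; left; apply Ee_pos).
     assert (HSm : Sm * (d * exp (- d)) <= 1) by (apply Rle_trans with (Sm * (1 - Ee d 1)); [apply Rmult_le_compat_l; auto|lra]).
     assert (E : exp d * exp (- d) = 1) by (rewrite <- exp_plus; replace (d + - d) with 0 by ring; apply exp_0).
     pose proof (exp_pos d).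
     assert (HH : exp d * (Sm * (d * exp (- d))) <= exp d * 1) by (apply Rmult_le_compat_l; lra).
     replace (exp d * (Sm * (d * exp (- d)))) with (d * Sm * (exp d * exp (- d))) in HH by ring.
     rewrite E in HH. lra. }
   assert (Hexp : exp d <= 1 + 2 * d) by (apply exp_small; lra).
   assert (C2 : d * T <= d * INR J + (L + eps) * exp d).
   { assert (d * T <= d * (INR J + (L + eps) * Sm)) by (apply Rmult_le_compat_l; lra).
     assert ((L + eps) * (d * Sm) <= (L + eps) * exp d) by (apply Rmult_le_compat_l; lra).
     lra. }
   assert (C3 : (1 - 4 * d) * PP <= q * q * PP).
   { apply Rmult_le_compat_r; auto. nra. }
   assert ((L + eps) * exp d <= (L + eps) * (1 + 2 * d)) by (apply Rmult_le_compat_l; lra).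
   nra. }
 apply (lim_lemma _ _ (a + b) (Rmin a b)). apply Rmin_pos; auto.
 intros eta [He Heb]. pose proof (Key eta He Heb). nra.
Qed.

Lemma within_eps (D : R -> Prop) (f : R -> R) x0 l :
  filterlim f (within D (locally x0)) (locally l) ->
  forall eps, 0 < eps -> exists d, 0 < d /\ forall z, Rabs (z - x0) < d -> D z -> Rabs (f z - l) < eps.
Proof. intros H eps He.
 destruct (H _ (locally_ball l (mkposreal eps He))) as [d Hd].
 exists d. split. apply cond_pos. intros z Hz HDz. apply (Hd z Hz HDz). Qed.

Lemma RInt_const_R' a b k : RInt (fun _ => k) a b = k * (b - a).
Proof. rewrite RInt_const. unfold scal; simpl; unfold mult; simpl. ring. Qed.

Section YPart.
Variables (T : R) (y y' : R -> R).
Hypothesis HT : 0 < T.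
Hypothesis Hd : forall x, 0 <= x <= T ->
  filterlim (fun d => (y (x + d) - y x) / d)
    (within (fun d => d <> 0 /\ 0 <= x + d <= T) (locally 0)) (locally (y' x)).
Hypothesis Hc : forall x, 0 <= x <= T ->
  filterlim y' (within (fun z => 0 <= z <= T) (locally x)) (locally (y' x)).

Lemma y_lip x : 0 <= x <= T -> exists d, 0 < d /\ forall z, Rabs (z - x) < d -> 0 <= z <= T ->
  Rabs (y z - y x) <= (Rabs (y' x) + 1) * Rabs (z - x).
Proof. intros Hx. destruct (within_eps _ _ _ _ (Hd x Hx) 1 ltac:(lra)) as [d [Hd0 Hdd]].
 exists d. split; auto. intros z Hz HzT.
 destruct (Req_dec z x) as [Heq|Hne].
 - subst z. unfold Rminus. rewrite (Rplus_opp_r (y x)), Rabs_R0.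
   apply Rmult_le_pos; [pose proof (Rabs_pos (y' x)); lra | apply Rabs_pos].
 - specialize (Hdd (z - x)). replace (z - x - 0) with (z - x) in Hdd by ring.
   replace (x + (z - x)) with z in Hdd by ring.
   assert (Hzx : z - x <> 0) by (intro; apply Hne; lra). specialize (Hdd Hz (conj Hzx HzT)).
   assert (E : y z - y x = (y z - y x) / (z - x) * (z - x)) by (field; lra).
   rewrite E, Rabs_mult.
   assert (Rabs ((y z - y x) / (z - x)) <= Rabs (y' x) + 1).
   { pose proof (Rabs_triang_inv ((y z - y x) / (z - x)) (y' x)). lra. }
   apply Rmult_le_compat_r; auto. apply Rabs_pos. Qed.

Lemma y_deriv x : 0 < x < T -> is_derive y x (y' x).
Proof. intros Hx. apply is_derive_Reals. intros eps He.
 destruct (within_eps _ _ _ _ (Hd x ltac:(lra)) eps He) as [d [Hd0 Hdd]].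
 assert (Hm : 0 < Rmin d (Rmin x (T - x))) by (apply Rmin_pos; [lra|apply Rmin_pos; lra]).
 exists (mkposreal _ Hm). intros h Hh0 Hh. simpl in Hh.
 pose proof (Rmin_l d (Rmin x (T - x))). pose proof (Rmin_r d (Rmin x (T - x))).
 pose proof (Rmin_l x (T - x)). pose proof (Rmin_r x (T - x)).
 apply (Hdd h). rewrite Rminus_0_r; lra.
 split; auto. apply Rabs_lt_between in Hh. lra. Qed.

Lemma y'_cont x : 0 < x < T -> continuous y' x.
Proof. intros Hx. apply filterlim_locally. intros eps.
 destruct (within_eps _ _ _ _ (Hc x ltac:(lra)) eps (cond_pos eps)) as [d [Hd0 Hdd]].
 assert (Hm : 0 < Rmin d (Rmin x (T - x))) by (apply Rmin_pos; [lra|apply Rmin_pos; lra]).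
 exists (mkposreal _ Hm). intros z Hz. change (Rabs (z - x) < Rmin d (Rmin x (T - x))) in Hz.
 pose proof (Rmin_l d (Rmin x (T - x))). pose proof (Rmin_r d (Rmin x (T - x))).
 pose proof (Rmin_l x (T - x)). pose proof (Rmin_r x (T - x)).
 change (Rabs (y' z - y' x) < eps). apply Hdd. lra. apply Rabs_lt_between in Hz. lra. Qed.

Definition yt s := y' (Rmax 0 s).

Lemma yt_cont s : 0 <= s < T -> continuous yt s.
Proof. intros Hs. apply filterlim_locally. intros eps.
 destruct (within_eps _ _ _ _ (Hc s ltac:(lra)) eps (cond_pos eps)) as [d [Hd0 Hdd]].
 assert (Hm : 0 < Rmin d (T - s)) by (apply Rmin_pos; lra).
 exists (mkposreal _ Hm). intros z Hz. change (Rabs (z - s) < Rmin d (T - s)) in Hz.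
 pose proof (Rmin_l d (T - s)). pose proof (Rmin_r d (T - s)).
 change (Rabs (yt z - yt s) < eps). unfold yt. rewrite (Rmax_right 0 s) by lra.
 apply Rabs_lt_between in Hz.
 apply Hdd.
 - destruct (Rle_lt_dec 0 z). rewrite Rmax_right by lra. apply Rabs_lt_between; lra.
   rewrite Rmax_left by lra. apply Rabs_lt_between; lra.
 - split. apply Rmax_l. apply Rmax_lub; lra. Qed.

Lemma ayt_ex a b : 0 <= a -> 0 <= b -> a < T -> b < T -> ex_RInt (fun s => Rabs (yt s)) a b.
Proof. intros. apply (ex_RInt_continuous (V := R_CompleteNormedModule)). intros z Hz.
 apply (continuous_comp yt Rabs). apply yt_cont.
 pose proof (Rmin_l a b). pose proof (Rmax_lub a b (Rmax a b) ltac:(apply Rmax_l) ltac:(apply Rmax_r)).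
 assert (Rmax a b < T) by (apply Rmax_lub_lt; auto). assert (0 <= Rmin a b) by (apply Rmin_glb; auto). lra.
 apply continuous_Rabs. Qed.

Lemma ftc_bound u v : 0 < u <= v -> v < T -> Rabs (y v - y u) <= RInt (fun s => Rabs (yt s)) u v.
Proof. intros Hu Hv.
 assert (H : is_RInt y' u v (y v - y u)).
 { apply (is_RInt_derive (V := R_CompleteNormedModule) y y'). 
   - intros x Hx. rewrite Rmin_left, Rmax_right in Hx by lra. apply y_deriv; lra.
   - intros x Hx. rewrite Rmin_left, Rmax_right in Hx by lra. apply y'_cont; lra. }
 assert (H' : is_RInt yt u v (y v - y u)).
 { apply (is_RInt_ext y'). intros x Hx. rewrite Rmin_left, Rmax_right in Hx by lra. unfold yt. rewrite Rmax_right by lra. auto. auto. }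
 rewrite <- (is_RInt_unique _ _ _ _ H'). apply abs_RInt_le. lra. exists (y v - y u). auto. Qed.

Lemma ftc_bound0 u v : 0 <= u <= v -> v < T -> Rabs (y v - y u) <= RInt (fun s => Rabs (yt s)) u v.
Proof. intros Hu Hv. destruct (Rlt_le_dec 0 u). apply ftc_bound; lra.
 assert (u = 0) by lra. subst u.
 destruct (Req_dec v 0) as [->|Hv0].
 - rewrite RInt_point. replace (y 0 - y 0) with 0 by ring. rewrite Rabs_R0. apply Rle_refl.
 - apply le_epsilon. intros eps He.
   destruct (y_lip 0 ltac:(lra)) as [d [Hd0 Hdd]].
   set (K := Rabs (y' 0) + 1). assert (HK : 0 < K) by (unfold K; pose proof (Rabs_pos (y' 0)); lra).
   set (u := Rmin (d / 2) (Rmin v (eps / K)) / 2).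
   assert (Hu0 : 0 < Rmin (d / 2) (Rmin v (eps / K))) by (apply Rmin_pos; [lra|apply Rmin_pos; [lra|apply Rdiv_lt_0_compat; lra]]).
   pose proof (Rmin_l (d / 2) (Rmin v (eps / K))). pose proof (Rmin_r (d / 2) (Rmin v (eps / K))).
   pose proof (Rmin_l v (eps / K)). pose proof (Rmin_r v (eps / K)).
   assert (Hu1 : 0 < u /\ u < d /\ u <= v /\ u <= eps / K) by (unfold u; lra).
   pose proof (ftc_bound u v ltac:(lra) Hv) as F1.
   specialize (Hdd u). rewrite Rminus_0_r in Hdd. rewrite Rabs_right in Hdd by lra.
   specialize (Hdd ltac:(lra) ltac:(lra)). fold K in Hdd.
   assert (K * u <= eps) by (apply Rmult_le_reg_r with (/ K); [apply Rinv_0_lt_compat; lra|];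
     replace (K * u * / K) with u by (field; lra); unfold Rdiv in Hu1; lra).
   assert (E : RInt (fun s => Rabs (yt s)) 0 u + RInt (fun s => Rabs (yt s)) u v = RInt (fun s => Rabs (yt s)) 0 v)
     by (apply (RInt_Chasles (V := R_CompleteNormedModule)); apply ayt_ex; lra).
   assert (0 <= RInt (fun s => Rabs (yt s)) 0 u) by (apply RInt_ge_0; [lra|apply ayt_ex; lra|intros; apply Rabs_pos]).
   pose proof (Rabs_triang (y v - y u) (y u - y 0)). replace (y v - y u + (y u - y 0)) with (y v - y 0) in H5 by ring.
   lra. Qed.

Section Weight.
Variables t beta : R.
Hypothesis Ht : 0 < t < T.
Hypothesis Hb : 0 < beta < 1.

Definition wt s := Rpower (t - s) (- beta) * Rabs (yt s).
Definition wf s := Rpower (t - s) (- beta) * Rabs (y' s).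

Lemma pow_cont s : s < t -> continuous (fun u => Rpower (t - u) (- beta)) s.
Proof. intros Hs. apply (ex_derive_continuous (K := R_AbsRing) (V := R_NormedModule)).
 apply (ex_derive_comp (fun u => Rpower u (- beta)) (fun u => t - u)).
 exists (- beta * Rpower (t - s) (- beta - 1)). apply is_derive_Reals. apply derivable_pt_lim_power. lra.
 auto_derive. auto. Qed.

Lemma wt_ex a b : 0 <= a < t -> 0 <= b < t -> ex_RInt wt a b.
Proof. intros Ha Hb'. apply (ex_RInt_continuous (V := R_CompleteNormedModule)). intros z Hz.
 assert (Rmax a b < t) by (apply Rmax_lub_lt; lra). assert (0 <= Rmin a b) by (apply Rmin_glb; lra).
 unfold wt. apply (continuous_mult (K := R_AbsRing) (fun u => Rpower (t - u) (- beta)) (fun u => Rabs (yt u))).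
 apply pow_cont; lra. apply (continuous_comp yt Rabs). apply yt_cont; lra. apply continuous_Rabs. Qed.

Lemma wf_wt a b : 0 <= a -> 0 <= b -> forall x, Rmin a b < x < Rmax a b -> wt x = wf x.
Proof. intros Ha Hb' x Hx. assert (0 <= Rmin a b) by (apply Rmin_glb; lra).
 unfold wt, wf, yt. rewrite Rmax_right by lra. auto. Qed.

Lemma wt_nonneg s : 0 <= wt s.
Proof. unfold wt. apply Rmult_le_pos. left; apply Rpower_pos. apply Rabs_pos. Qed.

Lemma weight_bound a b : 0 <= a <= b -> b < t ->
  Rpower (t - a) (- beta) * RInt (fun s => Rabs (yt s)) a b <= RInt wt a b.
Proof. intros Hab Hbt.
 assert (E : RInt (fun s => Rpower (t - a) (- beta) * Rabs (yt s)) a b = Rpower (t - a) (- beta) * RInt (fun s => Rabs (yt s)) a b).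
 { apply (RInt_scal (V := R_CompleteNormedModule) (fun s => Rabs (yt s))). apply ayt_ex; lra. }
 rewrite <- E. apply RInt_le. lra.
 apply (ex_RInt_scal (V := R_CompleteNormedModule) (fun s => Rabs (yt s))). apply ayt_ex; lra.
 apply wt_ex; lra.
 intros x Hx. unfold wt. apply Rmult_le_compat_r. apply Rabs_pos. apply Rpower_le_exp_neg; lra. Qed.

Lemma int_pow v : 0 <= v < t -> RInt (fun s => Rpower (t - s) (- beta)) 0 v <= Rpower t (1 - beta) / (1 - beta).
Proof. intros Hv.
 assert (H : is_RInt (fun s => Rpower (t - s) (- beta)) 0 v
   ((fun s => - Rpower (t - s) (1 - beta) / (1 - beta)) v - (fun s => - Rpower (t - s) (1 - beta) / (1 - beta)) 0)).
 { apply (is_RInt_derive (V := R_CompleteNormedModule) (fun s => - Rpower (t - s) (1 - beta) / (1 - beta))).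
   - intros x Hx. rewrite Rmin_left, Rmax_right in Hx by lra.
     assert (D : is_derive (fun u => Rpower u (1 - beta)) (t - x) ((1 - beta) * Rpower (t - x) (1 - beta - 1))).
     { apply is_derive_Reals. apply derivable_pt_lim_power. lra. }
     auto_derive. exists ((1 - beta) * Rpower (t - x) (1 - beta - 1)). replace (t + - x) with (t - x) by ring. auto.
     replace (t + - x) with (t - x) by ring. rewrite (is_derive_unique (fun x0 : R => Rpower x0 (1 - beta)) (t - x) _ D).
     replace (1 - beta - 1) with (- beta) by ring. field. lra.
   - intros x Hx. rewrite Rmin_left, Rmax_right in Hx by lra. apply pow_cont; lra. }
 rewrite (is_RInt_unique _ _ _ _ H). simpl. rewrite Rminus_0_r.
 pose proof (Rpower_pos (t - v) (1 - beta)).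
 assert (0 < / (1 - beta)) by (apply Rinv_0_lt_compat; lra). unfold Rdiv. nra. Qed.

Lemma partial_bound : exists M, forall v, 0 <= v < t -> RInt wt 0 v <= M.
Proof.
 destruct (continuity_ab_maj (fun s => Rabs (yt s)) 0 t ltac:(lra)) as [Mx [HMx HMx2]].
 { intros c Hc0. apply continuity_pt_filterlim. apply (continuous_comp yt Rabs). apply yt_cont; lra. apply continuous_Rabs. }
 set (K := Rabs (yt Mx)).
 exists (K * (Rpower t (1 - beta) / (1 - beta))). intros v Hv.
 apply Rle_trans with (RInt (fun s => K * Rpower (t - s) (- beta)) 0 v).
 - apply RInt_le. lra. apply wt_ex; lra.
   apply (ex_RInt_scal (V := R_CompleteNormedModule) (fun s => Rpower (t - s) (- beta))).
   apply (ex_RInt_continuous (V := R_CompleteNormedModule)). intros z Hz. rewrite Rmin_left, Rmax_right in Hz by lra. apply pow_cont; lra.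
   intros x Hx. unfold wt. rewrite Rmult_comm. apply Rmult_le_compat_r. left; apply Rpower_pos. apply HMx. lra.
 - rewrite (RInt_scal (V := R_CompleteNormedModule) (fun s => Rpower (t - s) (- beta))).
   2:{ apply (ex_RInt_continuous (V := R_CompleteNormedModule)). intros z Hz. rewrite Rmin_left, Rmax_right in Hz by lra. apply pow_cont; lra. }
   change (K * RInt (fun s => Rpower (t - s) (- beta)) 0 v <= K * (Rpower t (1 - beta) / (1 - beta))).
   apply Rmult_le_compat_l. unfold K; apply Rabs_pos. apply int_pow; lra. Qed.

Lemma chasles_pieces h m : 0 < h -> INR m * h < t ->
  sum_lt (fun i => RInt wt (INR i * h) (INR (S i) * h)) m = RInt wt 0 (INR m * h).
Proof. intros Hh Hm. induction m.
 - simpl. rewrite Rmult_0_l, RInt_point. reflexivity.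
 - rewrite sum_lt_S. rewrite S_INR in Hm.
   assert (0 <= INR m * h) by (pose proof (pos_INR m); nra).
   rewrite IHm by lra. rewrite S_INR.
   apply (RInt_Chasles (V := R_CompleteNormedModule) wt); apply wt_ex; lra. Qed.

Lemma y_main : exists I, is_RInt_gen wf (at_point 0) (at_left t) I /\ forall n, (1 <= n)%nat ->
  sum_lt (fun i => Rabs (y (INR (S i) * (t / INR n)) - y (INR i * (t / INR n))) * Rpower (INR (n - i)) (- beta)) n
  <= Rpower (t / INR n) beta * I.
Proof.
 destruct partial_bound as [M HM].
 destruct (impr_left wf 0 t M ltac:(lra)) as [I [HI HIb]].
 - intros a b Ha Hb'. apply (ex_RInt_ext wt). apply wf_wt; lra. apply wt_ex; lra.
 - intros x Hx. unfold wf. apply Rmult_le_pos. left; apply Rpower_pos. apply Rabs_pos.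
 - intros v Hv. rewrite <- (RInt_ext wt) by (apply wf_wt; lra). apply HM; auto.
 - exists I. split; auto. intros n Hn.
   assert (HIw : forall v, 0 <= v < t -> RInt wt 0 v <= I).
   { intros v Hv. rewrite (RInt_ext wt wf) by (apply wf_wt; lra). apply HIb; auto. }
   set (h := t / INR n).
   assert (Hn0 : 0 < INR n) by (apply INR_pos1; auto).
   assert (Hh : 0 < h) by (unfold h; apply Rdiv_lt_0_compat; lra).
   assert (Hnh : INR n * h = t) by (unfold h; field; lra).
   set (D := fun i => Rabs (y (INR (S i) * h) - y (INR i * h))).
   assert (E : forall i, (i < n)%nat -> Rpower (INR (n - i)) (- beta) = Rpower h beta * Rpower (t - INR i * h) (- beta)).
   { intros i Hi. assert (Ht' : t - INR i * h = INR (n - i) * h) by (rewrite minus_INR by lia; rewrite <- Hnh; ring).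
     rewrite Ht'. rewrite <- Rpower_mult_distr by (try (apply INR_pos1; lia); lra).
     assert (Hc1 : Rpower h beta * Rpower h (- beta) = 1) by (rewrite <- Rpower_plus; replace (beta + - beta) with 0 by ring; apply Rpower_O; lra).
     transitivity (Rpower (INR (n - i)) (- beta) * (Rpower h beta * Rpower h (- beta))); [rewrite Hc1; ring | ring]. }
   rewrite (sum_lt_ext _ (fun i => Rpower h beta * (D i * Rpower (t - INR i * h) (- beta)))).
   2:{ intros i Hi. rewrite E by auto. unfold D. ring. }
   rewrite sum_lt_scal. apply Rmult_le_compat_l. left; apply Rpower_pos.
   destruct n as [|m]. lia.
   assert (Hmh : INR m * h = t - h) by (rewrite S_INR in Hnh; lra).
   assert (Hmh0 : 0 <= INR m * h) by (pose proof (pos_INR m); nra).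
   assert (C1 : sum_lt (fun i => D i * Rpower (t - INR i * h) (- beta)) m <= RInt wt 0 (INR m * h)).
   { rewrite <- chasles_pieces by lra. apply sum_lt_le. intros i Hi.
     assert (Hi1 : INR (S i) <= INR m) by (apply le_INR; lia).
     assert (0 <= INR i * h) by (pose proof (pos_INR i); nra).
     assert (INR i * h <= INR (S i) * h) by (rewrite S_INR; lra).
     assert (INR (S i) * h < t) by nra.
     unfold D. rewrite Rmult_comm.
     apply Rle_trans with (Rpower (t - INR i * h) (- beta) * RInt (fun s => Rabs (yt s)) (INR i * h) (INR (S i) * h)).
     apply Rmult_le_compat_l. left; apply Rpower_pos. apply ftc_bound0; lra.
     apply weight_bound; lra. }
   assert (C2 : forall v, INR m * h <= v < t ->
     sum_lt (fun i => D i * Rpower (t - INR i * h) (- beta)) m + Rabs (y v - y (INR m * h)) * Rpower h (- beta) <= I).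
   { intros v Hv.
     assert (Rabs (y v - y (INR m * h)) * Rpower h (- beta) <= RInt wt (INR m * h) v).
     { replace h with (t - INR m * h) at 2 by lra. rewrite Rmult_comm.
       apply Rle_trans with (Rpower (t - INR m * h) (- beta) * RInt (fun s => Rabs (yt s)) (INR m * h) v).
       apply Rmult_le_compat_l. left; apply Rpower_pos. apply ftc_bound0; lra.
       apply weight_bound; lra. }
     assert (RInt wt 0 (INR m * h) + RInt wt (INR m * h) v = RInt wt 0 v)
       by (apply (RInt_Chasles (V := R_CompleteNormedModule) wt); apply wt_ex; lra).
     pose proof (HIw v ltac:(lra)). lra. }
   rewrite sum_lt_S. replace (t - INR m * h) with h by lra. unfold D at 2. rewrite Hnh.
   apply le_epsilon. intros eps He.
   destruct (y_lip t ltac:(lra)) as [d [Hd0 Hdd]].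
   set (K := Rabs (y' t) + 1). assert (HK : 0 < K) by (unfold K; pose proof (Rabs_pos (y' t)); lra).
   set (Rh := Rpower h (- beta)). assert (HRh : 0 < Rh) by apply Rpower_pos.
   set (r := Rmin (d / 2) (Rmin h (eps / (K * Rh)))).
   assert (Hr0 : 0 < r) by (apply Rmin_pos; [lra|apply Rmin_pos; [lra|apply Rdiv_lt_0_compat; nra]]).
   pose proof (Rmin_l (d / 2) (Rmin h (eps / (K * Rh)))). pose proof (Rmin_r (d / 2) (Rmin h (eps / (K * Rh)))).
   pose proof (Rmin_l h (eps / (K * Rh))). pose proof (Rmin_r h (eps / (K * Rh))).
   assert (Hrh : r <= h) by (unfold r; lra). assert (Hrd : r <= d / 2) by (unfold r; lra).
   assert (Hre : r <= eps / (K * Rh)) by (unfold r; lra).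
   set (v := t - r / 2).
   assert (Hv : INR m * h <= v < t) by (unfold v; lra).
   specialize (C2 v Hv).
   specialize (Hdd v). replace (v - t) with (- (r / 2)) in Hdd by (unfold v; ring).
   rewrite Rabs_Ropp, Rabs_right in Hdd by lra. specialize (Hdd ltac:(lra) ltac:(unfold v; lra)).
   fold K in Hdd.
   assert (Hkr : K * (r / 2) * Rh <= eps).
   { assert (r <= eps / (K * Rh)) by (unfold r; lra).
     assert (r * (K * Rh) <= eps) by (apply Rmult_le_reg_r with (/ (K * Rh)); [apply Rinv_0_lt_compat; nra|];
       replace (r * (K * Rh) * / (K * Rh)) with r by (field; nra); unfold Rdiv in *; lra).
     nra. }
   pose proof (Rabs_triang (y t - y v) (y v - y (INR m * h))).
   replace (y t - y v + (y v - y (INR m * h))) with (y t - y (INR m * h)) in H3 by ring.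
   rewrite <- Rabs_Ropp in Hdd. replace (- (y v - y t)) with (y t - y v) in Hdd by ring.
   assert (Rabs (y t - y (INR m * h)) * Rh <= (K * (r / 2) + Rabs (y v - y (INR m * h))) * Rh) by (apply Rmult_le_compat_r; lra).
   fold Rh in C2. nra.
Qed.

End Weight.

End YPart.

Lemma extend_zero (f : nat -> R) k n : (k <= n)%nat -> (forall i, (k <= i)%nat -> f i = 0) ->
  sum_lt f k = sum_lt f n.
Proof. intros Hk Hz. replace n with (k + (n - k))%nat by lia. rewrite sum_lt_app.
 rewrite (sum_lt_ext (fun i => f (k + i)%nat) (fun _ => 0)) by (intros; apply Hz; lia).
 assert (sum_lt (fun _ : nat => 0) (n - k) = 0) by (rewrite sum_lt_const; ring). lra. Qed.

Lemma Jd_delta a h u n : 0 < h ->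
  Jd a h (deltad a h u) n = / (Gamma (1 + a) * Gamma (2 - a)) *
    sum_lt (fun i => Kk a (1 - a) (n - i) * (u (S i) - u i)) n.
Proof. intros Hh. unfold Jd, deltad.
 assert (Hp : Rpower h a * Rpower h (- a) = 1) by (rewrite <- Rpower_plus; replace (a + - a) with 0 by ring; apply Rpower_O; lra).
 set (Dl := fun i => u (S i) - u i).
 rewrite (sum_lt_ext _ (fun m => Rpower h (- a) / Gamma (2 - a) * (bw a (n - m) *
    sum_lt (fun i => bw (1 - a) (S m - i) * Dl i) n))).
 2:{ intros m Hm. rewrite (extend_zero (fun i => bw (1 - a) (S m - i) * (u (S i) - u i)) (S m) n) by
      (try lia; intros i Hi; replace (S m - i)%nat with O by lia; rewrite bw_0; ring). unfold Dl. ring. }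
 rewrite sum_lt_scal.
 rewrite (sum_lt_ext _ (fun m => sum_lt (fun i => bw a (n - m) * bw (1 - a) (S m - i) * Dl i) n)).
 2:{ intros m Hm. rewrite <- sum_lt_scal. apply sum_lt_ext. intros; ring. }
 rewrite (sum_lt_swap (fun m i => bw a (n - m) * bw (1 - a) (S m - i) * Dl i)).
 rewrite (sum_lt_ext (fun i => sum_lt (fun m => bw a (n - m) * bw (1 - a) (S m - i) * Dl i) n)
   (fun i => Kk a (1 - a) (n - i) * Dl i)).
 2:{ intros i Hi. rewrite (sum_lt_ext _ (fun m => Dl i * (bw a (n - m) * bw (1 - a) (S m - i)))) by (intros; ring).
     rewrite sum_lt_scal. rewrite Rmult_comm. f_equal.
     replace n with (i + (n - i))%nat at 1 by lia. rewrite sum_lt_app.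
     rewrite (sum_lt_ext (fun m => bw a (n - m) * bw (1 - a) (S m - i)) (fun _ => 0) i) by (intros m Hm; replace (S m - i)%nat with O by lia; rewrite bw_0; ring).
     rewrite sum_lt_const, Rmult_0_r, Rplus_0_l. unfold Kk. apply sum_lt_ext. intros q Hq.
     replace (n - (i + q))%nat with (n - i - q)%nat by lia. replace (S (i + q) - i)%nat with (S q) by lia. reflexivity. }
 unfold Dl. rewrite Rinv_mult.
 transitivity ((Rpower h a * Rpower h (- a)) * (/ Gamma (1 + a) * / Gamma (2 - a)) * sum_lt (fun i => Kk a (1 - a) (n - i) * (u (S i) - u i)) n).
 unfold Rdiv; ring. rewrite Hp. ring.
Qed.

Theorem theorem2 (alpha T : R) (y y' : R -> R) :
  0 < alpha < 1 -> 0 < T ->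
  (forall x, 0 <= x <= T ->
     filterlim (fun d => (y (x + d) - y x) / d)
       (within (fun d => d <> 0 /\ 0 <= x + d <= T) (locally 0))
       (locally (y' x))) ->
  (forall x, 0 <= x <= T ->
     filterlim y' (within (fun z => 0 <= z <= T) (locally x)) (locally (y' x))) ->
  let beta := Rmin alpha (1 - alpha) in
  exists C : R, forall t : R, 0 < t < T ->
    exists I : R,
      is_RInt_gen (fun s => Rpower (t - s) (- beta) * Rabs (y' s))
        (at_point 0) (at_left t) I /\
      exists n0 : nat, forall n : nat, (n0 <= n)%nat ->
        let h := t / INR n in
        let r_n := JdeltaY alpha h y n - y (INR n * h) + y 0 in
        Rabs r_n <= C * Rpower h beta * I.
Proof.
 intros Ha HT Hd Hc beta.
 assert (Hb : 0 < beta) by (unfold beta; apply Rmin_pos; lra).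
 assert (HbA : beta <= alpha) by apply Rmin_l. assert (HbB : beta <= 1 - alpha) by apply Rmin_r.
 destruct (kernel_limit alpha (1 - alpha) beta ltac:(lra) ltac:(lra) ltac:(ring) Hb HbA HbB) as [L [HL HK]].
 pose proof (Gamma_pos alpha Ha) as G1. pose proof (Gamma_pos (1 - alpha) ltac:(lra)) as G2.
 set (G := Gamma (1 + alpha) * Gamma (1 + (1 - alpha))).
 assert (HG : 0 < G) by (unfold G; nra).
 assert (HLG : L = G).
 { apply Rle_antisym.
   - apply L_upper; try lra. intros j Hj; apply HK; auto.
   - apply L_lower; try lra. intros j Hj; apply HK; auto.
     intros eps He.
     set (X := Rpower (6 / eps) (/ beta)).
     destruct (INR_archimed 1 X ltac:(lra)) as [J HJ]. rewrite Rmult_1_r in HJ.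
     exists (S J). intros j Hj.
     assert (HX : 0 < X) by apply Rpower_pos.
     assert (HJ1 : X <= INR (S J)) by (rewrite S_INR; lra).
     assert (HjJ : INR (S J) <= INR j) by (apply le_INR; auto).
     assert (Hpow : 6 / eps <= Rpower (INR (S J)) beta).
     { replace (6 / eps) with (Rpower X beta).
       apply Rle_Rpower_l; lra.
       unfold X. rewrite Rpower_mult. replace (/ beta * beta) with 1 by (field; lra).
       apply Rpower_1. apply Rdiv_lt_0_compat; lra. }
     assert (Hq : Rpower (INR j) (- beta) <= eps / 6).
     { apply Rle_trans with (Rpower (INR (S J)) (- beta)). apply Rpower_le_exp_neg; lra.
       rewrite Rpower_Ropp. pose proof (Rpower_pos (INR (S J)) beta).
       assert (0 < 6 / eps) by (apply Rdiv_lt_0_compat; lra).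
       pose proof (Rinv_le_contravar _ _ H0 Hpow). replace (/ (6 / eps)) with (eps / 6) in H1 by (field; lra). lra. }
     destruct (HK j ltac:(lia)) as [_ [Hk2 _]]. lra. }
 exists (6 / G).
 intros t Ht.
 destruct (y_main T y y' HT Hd Hc t beta Ht ltac:(lra)) as [I [HI Hsum]].
 exists I. split. exact HI.
 exists 1%nat. intros n Hn h r_n.
 assert (Hh : 0 < h) by (unfold h; apply Rdiv_lt_0_compat; [lra|apply INR_pos1; auto]).
 pose proof (Hsum n Hn) as Hs. fold h in Hs.
 assert (HI0 : 0 <= I).
 { apply Rle_trans with (sum_lt (fun i => Rabs (y (INR (S i) * h) - y (INR i * h)) * Rpower (INR (n - i)) (- beta)) n / Rpower h beta).
   apply Rmult_le_pos. apply sum_lt_nonneg. intros; apply Rmult_le_pos; [apply Rabs_pos|left; apply Rpower_pos].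
   left; apply Rinv_0_lt_compat, Rpower_pos.
   pose proof (Rpower_pos h beta). apply Rmult_le_reg_l with (Rpower h beta); auto. unfold Rdiv.
   rewrite <- Rmult_assoc, (Rmult_comm (Rpower h beta)), Rmult_assoc, Rinv_r by lra. lra. }
 unfold r_n, JdeltaY. rewrite Jd_delta by auto.
 replace (2 - alpha) with (1 + (1 - alpha)) by ring. fold G.
 set (Dl := fun i => y (INR (S i) * h) - y (INR i * h)).
 assert (Etel : y (INR n * h) - y 0 = sum_lt Dl n).
 { unfold Dl. rewrite (sum_lt_tele (fun k => y (INR k * h))). simpl INR. rewrite Rmult_0_l. reflexivity. }
 assert (Erew : / G * sum_lt (fun i => Kk alpha (1 - alpha) (n - i) * Dl i) n - y (INR n * h) + y 0 =
   sum_lt (fun i => Dl i * (Kk alpha (1 - alpha) (n - i) / G - 1)) n).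
 { assert (/ G * sum_lt (fun i => Kk alpha (1 - alpha) (n - i) * Dl i) n - y (INR n * h) + y 0 =
     / G * sum_lt (fun i => Kk alpha (1 - alpha) (n - i) * Dl i) n - sum_lt Dl n) by lra.
   rewrite H. rewrite <- sum_lt_scal, <- sum_lt_minus. apply sum_lt_ext. intros; unfold Rdiv; ring. }
 change (fun i => Kk alpha (1 - alpha) (n - i) * (y (INR (S i) * h) - y (INR i * h))) with (fun i => Kk alpha (1 - alpha) (n - i) * Dl i).
 rewrite Erew.
 eapply Rle_trans. apply sum_lt_abs.
 apply Rle_trans with (6 / G * sum_lt (fun i => Rabs (y (INR (S i) * h) - y (INR i * h)) * Rpower (INR (n - i)) (- beta)) n).
 - rewrite <- sum_lt_scal. apply sum_lt_le. intros i Hi. rewrite Rabs_mult.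
   destruct (HK (n - i)%nat ltac:(lia)) as [K1 [K2 _]].
   assert (Rabs (Kk alpha (1 - alpha) (n - i) / G - 1) <= 6 / G * Rpower (INR (n - i)) (- beta)).
   { replace (Kk alpha (1 - alpha) (n - i) / G - 1) with ((Kk alpha (1 - alpha) (n - i) - L) / G) by (rewrite HLG; field; lra).
     rewrite Rabs_right. unfold Rdiv. rewrite Rmult_comm, (Rmult_comm 6), Rmult_assoc.
     apply Rmult_le_compat_l. left; apply Rinv_0_lt_compat; lra. lra.
     apply Rle_ge. apply Rdiv_le_0_compat; lra. }
   unfold Dl. pose proof (Rabs_pos (y (INR (S i) * h) - y (INR i * h))).
   assert (Rabs (y (INR (S i) * h) - y (INR i * h)) * Rabs (Kk alpha (1 - alpha) (n - i) / G - 1) <=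
     Rabs (y (INR (S i) * h) - y (INR i * h)) * (6 / G * Rpower (INR (n - i)) (- beta))) by (apply Rmult_le_compat_l; auto).
   lra.
 - assert (0 < 6 / G) by (apply Rdiv_lt_0_compat; lra).
   rewrite Rmult_assoc. apply Rmult_le_compat_l; lra.
Qed.
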